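(* Let $d>2$, $\beta>0$, $\lambda>0$, $\mu\in\mathbb R$, and let $r_\kappa$ be as defined in the context. Then: (a) $r_\kappa$ converges as $\kappa\to\infty$ to some $r_*\in(0,1)$ if and only if $\beta^d\mu<\zeta(d)\lambda$; in that case $r_*$ is the unique solution of $$\frac{\mu}{\lambda}=\frac{\log r_*}{\beta\lambda}+\frac{1}{\beta^d}\int_{[0,\infty)^d}\frac{r_*\,dp}{e^{|p|_1}-r_*}.$$ (b) $\kappa^d(1-r_\kappa)\to\beta^d\lambda/(\beta^d\mu-\zeta(d)\lambda)$ (and hence $r_\kappa\to1$) if and only if $\beta^d\mu>\zeta(d)\lambda$. (c) $r_\kappa\to1$ and $\kappa^d(1-r_\kappa)\to+\infty$ if and only if $\beta^d\mu=\zeta(d)\lambda$.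
   Context: $h_\kappa=\frac12\sum_{j=1}^d\big(-\partial^2/\partial x_j^2+x_j^2/\kappa^2-1/\kappa\big)$ on $L^2(\mathbb R^d)$ (spectrum $\{|s|_1/\kappa: s\in\mathbb Z_+^d\}$, $|s|_1=\sum_js_j$), $G_\kappa(\beta)=e^{-\beta h_\kappa}$. For $\kappa\ge1$, $(r_\kappa,s_\kappa)$ is the unique solution with $r_\kappa\in(0,1)$ of the system $r=\exp(\beta\mu-\beta\lambda s/\kappa^d)$, $s=\mathrm{Tr}[rG_\kappa(\beta)(1-rG_\kappa(\beta))^{-1}]$; equivalently $\kappa^{-d}\mathrm{Tr}[r_\kappa G_\kappa(\beta)(1-r_\kappa G_\kappa(\beta))^{-1}]=(\beta\mu-\log r_\kappa)/(\beta\lambda)$. $\zeta$ is the Riemann zeta function; $|p|_1=\sum_jp_j$. *)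

(* Defs.v *)
From Stdlib Require Import Reals Lra.
Open Scope R_scope.

Fixpoint natsum (f : nat -> nat) (n : nat) : nat :=
  match n with
  | O => f O
  | S m => (natsum f m + f (S m))%nat
  end.

(* deg d n = #{ s in Z_+^d : |s|_1 = n } : the multiplicity of the
   eigenvalue n/kappa of h_kappa on L^2(R^d). *)
Fixpoint deg (d n : nat) : nat :=
  match d with
  | O => match n with O => 1%nat | S _ => 0%nat end
  | S d' => natsum (fun k => deg d' (n - k)) n
  end.

(* Tr[ r G_kappa(beta) (1 - r G_kappa(beta))^{-1} ] = s : the trace computed
   as the sum over the spectrum {|s|_1/kappa : s in Z_+^d} of h_kappa,
   counted with multiplicity (grouped by the value n = |s|_1). *)
Definition TraceVal (d : nat) (beta kappa r s : R) : Prop :=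
  infinite_sum
    (fun n => INR (deg d n) *
       (r * exp (- beta * INR n / kappa) / (1 - r * exp (- beta * INR n / kappa))))
    s.

Definition IsRkappa (d : nat) (beta lambda mu : R) (r : R -> R) : Prop :=
  forall kappa, 1 <= kappa ->
    0 < r kappa < 1 /\
    exists s, TraceVal d beta kappa (r kappa) s /\
      r kappa = exp (beta * mu - beta * lambda * s / kappa ^ d).

Definition ZetaVal (d : nat) (z : R) : Prop :=
  infinite_sum (fun k => / (INR (S k)) ^ d) z.

Definition ImproperInt0 (G : R -> R) (l : R) : Prop :=
  exists pr : (forall T, Riemann_integrable G 0 T),
    forall eps, 0 < eps -> exists M, forall T, M <= T ->
      Rabs (RiemannInt (pr T) - l) < eps.

(* OrthantInt d F l : the (iterated, Tonelli) integral over [0,oo)^d of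
   p |-> F(|p|_1) equals l. *)
Fixpoint OrthantInt (d : nat) (F : R -> R) (l : R) : Prop :=
  match d with
  | O => l = F 0
  | S d' => exists G : R -> R,
      (forall x, 0 <= x -> OrthantInt d' (fun t => F (x + t)) (G x)) /\
      ImproperInt0 G l
  end.

Definition cv_at_infty (f : R -> R) (l : R) : Prop :=
  forall eps, 0 < eps -> exists M, forall kappa, M <= kappa -> Rabs (f kappa - l) < eps.

Definition to_plus_infty (f : R -> R) : Prop :=
  forall A, exists M, forall kappa, M <= kappa -> A < f kappa.

Definition LimitEq (d : nat) (beta lambda mu r : R) : Prop :=
  exists I, OrthantInt d (fun t => r / (exp t - r)) I /\
    mu / lambda = ln r / (beta * lambda) + I / beta ^ d.

(* Main.v *)
Require Import Defs.
From Stdlib Require Import Reals Ranalysis5 Lra Lia Classical ClassicalEpsilon FunctionalExtensionality.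
Open Scope R_scope.

Lemma isum_Uncv s l : infinite_sum s l <-> Un_cv (sum_f_R0 s) l.
Proof. split; intro H; exact H. Qed.

Lemma psum_nonneg (a : nat -> R) n : (forall i, 0 <= a i) -> 0 <= sum_f_R0 a n.
Proof. intro H; induction n; simpl; [apply H| specialize (H (S n)); lra]. Qed.

Lemma psum_mono (a : nat -> R) n m : (forall i, 0 <= a i) -> (n <= m)%nat ->
  sum_f_R0 a n <= sum_f_R0 a m.
Proof.
  intros H Hnm; induction Hnm; [lra|]. simpl. specialize (H (S m)); lra.
Qed.

Lemma psum_le (a b : nat -> R) n : (forall i, a i <= b i) -> sum_f_R0 a n <= sum_f_R0 b n.
Proof. intro H; induction n; simpl; [apply H| specialize (H (S n)); lra]. Qed.

Lemma isum_le_lim (a : nat -> R) l n : (forall i, 0 <= a i) -> infinite_sum a l ->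
  sum_f_R0 a n <= l.
Proof. intros H1 H2. apply sum_incr; auto. Qed.

Lemma isum_nonneg (a : nat -> R) l : (forall i, 0 <= a i) -> infinite_sum a l -> 0 <= l.
Proof. intros H1 H2. apply Rle_trans with (sum_f_R0 a 0); [apply psum_nonneg; auto|]. apply isum_le_lim; auto. Qed.

Lemma isum_bounded (a : nat -> R) B : (forall i, 0 <= a i) ->
  (forall n, sum_f_R0 a n <= B) -> exists l, infinite_sum a l /\ l <= B.
Proof.
  intros H1 H2.
  assert (Hg : Un_growing (sum_f_R0 a)).
  { intro n. simpl. specialize (H1 (S n)). lra. }
  assert (Hub : has_ub (sum_f_R0 a)).
  { exists B. intros x [n ->]. apply H2. }
  destruct (growing_cv _ Hg Hub) as [l Hl].
  exists l; split; [exact Hl|].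
  apply Rle_cv_lim with (sum_f_R0 a) (fun _ => B); auto.
  intros eps He; exists 0%nat; intros; unfold Rdist; rewrite Rminus_diag, Rabs_R0; auto.
Qed.

Lemma isum_le (a b : nat -> R) la lb : (forall i, a i <= b i) -> infinite_sum a la ->
  infinite_sum b lb -> la <= lb.
Proof. intros H Ha Hb. apply Rle_cv_lim with (sum_f_R0 a) (sum_f_R0 b); auto.
  intro; apply psum_le; auto. Qed.

Lemma isum_comp (a b : nat -> R) lb : (forall i, 0 <= a i <= b i) ->
  infinite_sum b lb -> exists la, infinite_sum a la /\ la <= lb.
Proof.
  intros H Hb. apply isum_bounded. intro i; apply H.
  intro n. apply Rle_trans with (sum_f_R0 b n). apply psum_le; intro; apply H.
  apply isum_le_lim; auto. intro i; destruct (H i); lra.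
Qed.

Lemma isum_unique a l1 l2 : infinite_sum a l1 -> infinite_sum a l2 -> l1 = l2.
Proof. apply uniqueness_sum. Qed.

Lemma isum_ext a b l : (forall i, a i = b i) -> infinite_sum a l -> infinite_sum b l.
Proof.
  intros H Ha. replace b with a; auto. apply functional_extensionality; auto.
Qed.

Lemma sum_f_R0_ext a b n : (forall i, a i = b i) -> sum_f_R0 a n = sum_f_R0 b n.
Proof. intro H; induction n; simpl; rewrite ?IHn, ?H; auto. Qed.

Lemma isum_plus a b la lb : infinite_sum a la -> infinite_sum b lb ->
  infinite_sum (fun i => a i + b i) (la + lb).
Proof.
  intros Ha Hb. apply isum_Uncv.
  assert (E : sum_f_R0 (fun i => a i + b i) = fun n => sum_f_R0 a n + sum_f_R0 b n).
  { apply functional_extensionality; intro n; apply plus_sum. }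
  rewrite E. apply CV_plus; auto.
Qed.

Lemma isum_scal c a la : infinite_sum a la -> infinite_sum (fun i => c * a i) (c * la).
Proof.
  intros Ha. apply isum_Uncv.
  assert (E : sum_f_R0 (fun i => c * a i) = fun n => c * sum_f_R0 a n).
  { apply functional_extensionality; intro n; rewrite scal_sum; apply sum_f_R0_ext; intro; ring. }
  rewrite E. apply CV_mult; auto.
  intros e He; exists 0%nat; intros; unfold Rdist; rewrite Rminus_diag, Rabs_R0; auto.
Qed.

Lemma cv_const c : Un_cv (fun _ => c) c.
Proof. intros e He; exists 0%nat; intros; unfold Rdist; rewrite Rminus_diag, Rabs_R0; auto. Qed.

Lemma cv_le_bound u l B : Un_cv u l -> (forall n, u n <= B) -> l <= B.
Proof. intros H1 H2. apply Rle_cv_lim with u (fun _ => B); auto. apply cv_const. Qed.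

Lemma cv_ge_bound u l B : Un_cv u l -> (forall n, B <= u n) -> B <= l.
Proof. intros H1 H2. apply Rle_cv_lim with (fun _ => B) u; auto. apply cv_const. Qed.

Lemma finite_sum_cv (u : nat -> nat -> R) (c : nat -> R) J :
  (forall j, Un_cv (fun N => u N j) (c j)) ->
  Un_cv (fun N => sum_f_R0 (u N) J) (sum_f_R0 c J).
Proof.
  intro H; induction J; simpl; auto.
  apply CV_plus; auto.
Qed.

Lemma sum_swap (a : nat -> nat -> R) N J :
  sum_f_R0 (fun j => sum_f_R0 (fun n => a n j) N) J =
  sum_f_R0 (fun n => sum_f_R0 (fun j => a n j) J) N.
Proof.
  induction J; simpl; auto.
  rewrite IHJ. rewrite <- plus_sum. reflexivity.
Qed.

Lemma tonelli (a : nat -> nat -> R) (Rn : nat -> R) S :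
  (forall n j, 0 <= a n j) -> (forall n, infinite_sum (a n) (Rn n)) -> infinite_sum Rn S ->
  exists C : nat -> R, (forall j, infinite_sum (fun n => a n j) (C j)) /\ infinite_sum C S.
Proof.
  intros Hpos Hrow Htot.
  assert (HRpos : forall n, 0 <= Rn n).
  { intro n. apply isum_nonneg with (a n); auto. }
  assert (Hex : forall j, exists c, infinite_sum (fun n => a n j) c).
  { intro j. destruct (isum_comp (fun n => a n j) Rn S) as [c [Hc _]]; eauto.
    intro n; split; auto.
    apply Rle_trans with (sum_f_R0 (a n) j).
    - destruct j; simpl; [lra|].
      pose proof (psum_nonneg (a n) j (Hpos n)); lra.
    - apply isum_le_lim; auto. }
  set (C := fun j => proj1_sig (constructive_indefinite_description _ (Hex j))).
  assert (HC : forall j, infinite_sum (fun n => a n j) (C j)).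
  { intro j; unfold C; destruct (constructive_indefinite_description _ (Hex j)); auto. }
  assert (HCpos : forall j, 0 <= C j).
  { intro j; apply isum_nonneg with (fun n => a n j); auto. }
  assert (Hb1 : forall J, sum_f_R0 C J <= S).
  { intro J. apply cv_le_bound with (fun N => sum_f_R0 (fun j => sum_f_R0 (fun n => a n j) N) J).
    - apply finite_sum_cv. intro j; apply HC.
    - intro N. rewrite sum_swap.
      apply Rle_trans with (sum_f_R0 Rn N).
      + apply psum_le. intro n. apply isum_le_lim; auto.
      + apply isum_le_lim; auto. }
  destruct (isum_bounded C S HCpos Hb1) as [T [HT HTS]].
  exists C; split; auto.
  replace S with T; auto.
  apply Rle_antisym; auto.
  apply cv_le_bound with (sum_f_R0 Rn); auto.
  intro N.
  apply cv_le_bound with (fun J => sum_f_R0 (fun n => sum_f_R0 (fun j => a n j) J) N).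
  - apply finite_sum_cv. intro n; apply Hrow.
  - intro J. rewrite <- sum_swap.
    apply Rle_trans with (sum_f_R0 C J).
    + apply psum_le. intro j. apply isum_le_lim; auto.
    + apply isum_le_lim; auto.
Qed.

Lemma geom_sum z : 0 <= z < 1 -> infinite_sum (fun n => z ^ n) (/ (1 - z)).
Proof.
  intro Hz. pose proof (GP_infinite z) as H. unfold Pser in H.
  apply isum_ext with (fun n => 1 * z ^ n). intro; ring.
  apply H. rewrite Rabs_right; lra.
Qed.

Lemma isum_shift1 a l : infinite_sum a l ->
  infinite_sum (fun n => match n with O => 0 | S m => a m end) l.
Proof.
  intros H e He. destruct (H e He) as [N HN]. exists (S N). intros n Hn.
  destruct n; [lia|].
  assert (E : forall m, sum_f_R0 (fun n => match n with O => 0 | S m => a m end) (S m) = sum_f_R0 a m).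
  { induction m; simpl; [ring|]. simpl in IHm. rewrite IHm. reflexivity. }
  rewrite E. apply HN. lia.
Qed.

Definition shiftk (k : nat) (a : nat -> R) (n : nat) : R :=
  if (k <=? n)%nat then a (n - k)%nat else 0.

Lemma isum_shiftk k a l : infinite_sum a l -> infinite_sum (shiftk k a) l.
Proof.
  induction k; intro H.
  - apply isum_ext with a; auto. intro i; unfold shiftk; simpl. f_equal; lia.
  - apply isum_ext with (fun n => match n with O => 0 | S m => shiftk k a m end).
    + intro i; unfold shiftk; destruct i; simpl; auto.
    + apply isum_shift1; auto.
Qed.

Lemma isum_finite b n : (forall k, (n < k)%nat -> b k = 0) -> infinite_sum b (sum_f_R0 b n).
Proof.
  intros H e He. exists n. intros m Hm.
  replace (sum_f_R0 b m) with (sum_f_R0 b n). unfold Rdist; rewrite Rminus_diag, Rabs_R0; auto.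
  induction Hm; auto. simpl. rewrite H; [|lia]. lra.
Qed.

Lemma INR_natsum f n : INR (natsum f n) = sum_f_R0 (fun k => INR (f k)) n.
Proof. induction n; simpl natsum; simpl sum_f_R0; auto. rewrite plus_INR, IHn; auto. Qed.

Lemma deg_gen d z : 0 <= z < 1 -> infinite_sum (fun n => INR (deg d n) * z ^ n) (/ (1 - z) ^ d).
Proof.
  intro Hz. induction d.
  - simpl. replace (/ 1) with (sum_f_R0 (fun n => INR (deg 0 n) * z ^ n) 0).
    + apply isum_finite. intros k Hk. destruct k; [lia|]. simpl. ring.
    + simpl. rewrite Rinv_1. ring.
  - set (a := fun k n => shiftk k (fun m => INR (deg d m) * z ^ m) n * z ^ k).
    assert (Hrow : forall k, infinite_sum (a k) (/ (1 - z) ^ d * z ^ k)).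
    { intro k. unfold a. apply isum_ext with (fun n => z ^ k * shiftk k (fun m => INR (deg d m) * z ^ m) n).
      intro; ring. rewrite Rmult_comm. apply isum_scal. apply isum_shiftk; auto. }
    assert (Htot : infinite_sum (fun k => / (1 - z) ^ d * z ^ k) (/ (1 - z) ^ S d)).
    { replace (/ (1 - z) ^ S d) with (/ (1 - z) ^ d * / (1 - z)).
      apply isum_scal. apply geom_sum; auto.
      simpl. rewrite Rinv_mult. ring. }
    assert (Hpos : forall k n, 0 <= a k n).
    { intros k n. unfold a, shiftk. destruct (k <=? n)%nat.
      - apply Rmult_le_pos; [apply Rmult_le_pos|]; try apply pow_le; try lra; apply pos_INR.
      - rewrite Rmult_0_l; lra. }
    destruct (tonelli a _ _ Hpos Hrow Htot) as [C [HC1 HC2]].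
    apply isum_ext with C; auto.
    intro n. specialize (HC1 n).
    assert (Hf := isum_finite (fun k => a k n) n).
    rewrite (isum_unique _ _ _ HC1 (Hf ltac:(intros k Hk; unfold a, shiftk;
       replace (k <=? n)%nat with false by (symmetry; apply Nat.leb_gt; lia); ring))).
    simpl deg. rewrite INR_natsum. rewrite Rmult_comm, scal_sum.
    clear HC1 Hf.
    apply sum_eq. intros k Hk. unfold a, shiftk.
    replace (k <=? n)%nat with true by (symmetry; apply Nat.leb_le; lia).
    rewrite Rmult_assoc, <- pow_add. replace (n - k + k)%nat with n by lia. ring.
Qed.

Lemma exp_INR_mult n x : exp (INR n * x) = exp x ^ n.
Proof.
  induction n. simpl. rewrite Rmult_0_l, exp_0; auto.
  rewrite S_INR, Rmult_plus_distr_r, Rmult_1_l, exp_plus, IHn. simpl. ring.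
Qed.

Lemma exp_neg_lt1 x : 0 < x -> 0 < exp (- x) < 1.
Proof. intro H; split. apply exp_pos. rewrite <- exp_0. apply exp_increasing. lra. Qed.

Lemma pow_lt1 z n : 0 <= z < 1 -> 0 <= z ^ S n < 1.
Proof.
  intro H; split. apply pow_le; lra.
  induction n. simpl; lra. simpl in *. 
  apply Rle_lt_trans with (z * 1). apply Rmult_le_compat_l; lra. lra.
Qed.

Definition qk (beta kappa : R) := exp (- (beta / kappa)).

Lemma trace_closed d beta kappa r s : 0 < beta -> 0 < kappa -> 0 < r < 1 ->
  TraceVal d beta kappa r s ->
  infinite_sum (fun i => r ^ S i * / (1 - qk beta kappa ^ S i) ^ d) s.
Proof.
  intros Hb Hk Hr HT. unfold TraceVal in HT.
  set (q := qk beta kappa).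
  assert (Hq : 0 < q < 1).
  { unfold q, qk. apply exp_neg_lt1. apply Rdiv_lt_0_compat; lra. }
  assert (HE : forall n, exp (- beta * INR n / kappa) = q ^ n).
  { intro n. unfold q, qk. rewrite <- exp_INR_mult. f_equal. field. lra. }
  set (a := fun n i => INR (deg d n) * (r * q ^ n) ^ S i).
  assert (Hpos : forall n i, 0 <= a n i).
  { intros n i; unfold a. apply Rmult_le_pos. apply pos_INR. apply pow_le.
    apply Rmult_le_pos. lra. apply pow_le; lra. }
  assert (Hrow : forall n, infinite_sum (a n)
     (INR (deg d n) * (r * exp (- beta * INR n / kappa) / (1 - r * exp (- beta * INR n / kappa))))).
  { intro n. rewrite HE. unfold a.
    assert (Hz : 0 <= r * q ^ n < 1).
    { split. apply Rmult_le_pos. lra. apply pow_le; lra.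
      apply Rle_lt_trans with (r * 1). apply Rmult_le_compat_l. lra.
      destruct n. simpl; lra. left; apply pow_lt1; lra. lra. }
    apply isum_scal.
    apply isum_ext with (fun i => (r * q ^ n) * (r * q ^ n) ^ i). intro; simpl; ring.
    unfold Rdiv. apply isum_scal. apply geom_sum. auto. }
  destruct (tonelli a _ _ Hpos Hrow HT) as [C [HC1 HC2]].
  apply isum_ext with C; auto.
  intro i. specialize (HC1 i).
  apply isum_unique with (fun n => a n i); auto.
  unfold a.
  apply isum_ext with (fun n => r ^ S i * (INR (deg d n) * (q ^ S i) ^ n)).
  { intro n. rewrite Rpow_mult_distr. rewrite <- !pow_mult. rewrite Nat.mul_comm. ring. }
  apply isum_scal. apply deg_gen. apply pow_lt1. lra.
Qed.

Definition Lterm (k : nat) (z : R) (i : nat) : R := z ^ S i / INR (S i) ^ k.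

Definition Li (k : nat) (z : R) : R :=
  match excluded_middle_informative (exists l, infinite_sum (Lterm k z) l) with
  | left H => proj1_sig (constructive_indefinite_description _ H)
  | right _ => 0
  end.

Lemma Li_eq k z l : infinite_sum (Lterm k z) l -> Li k z = l.
Proof.
  intro H. unfold Li. destruct excluded_middle_informative as [H1|H1].
  - destruct constructive_indefinite_description as [l' Hl']. simpl.
    eapply isum_unique; eauto.
  - exfalso; apply H1; eauto.
Qed.

Lemma INR_S_pow_ge1 i k : 1 <= INR (S i) ^ k.
Proof.
  induction k. simpl; lra. change (INR (S i) ^ S k) with (INR (S i) * INR (S i) ^ k).
  assert (1 <= INR (S i)) by (rewrite S_INR; pose proof (pos_INR i); lra).
  replace 1 with (1 * 1) by ring. apply Rmult_le_compat; lra.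
Qed.

Lemma Lterm_bounds k z i : 0 <= z -> 0 <= Lterm k z i <= z ^ S i.
Proof.
  intro Hz. unfold Lterm. pose proof (INR_S_pow_ge1 i k).
  assert (0 <= z ^ S i) by (apply pow_le; lra).
  split. unfold Rdiv; apply Rmult_le_pos; [lra|]. left; apply Rinv_0_lt_compat; lra.
  unfold Rdiv. rewrite <- (Rmult_1_r (z ^ S i)) at 2. apply Rmult_le_compat_l; auto.
  rewrite <- Rinv_1. apply Rinv_le_contravar; lra.
Qed.

Lemma geom_sum1 z : 0 <= z < 1 -> infinite_sum (fun i => z ^ S i) (z / (1 - z)).
Proof.
  intro Hz. apply isum_ext with (fun i => z * z ^ i). intro; simpl; ring.
  apply isum_scal. apply geom_sum; auto.
Qed.

Lemma Li_spec k z : 0 <= z < 1 -> infinite_sum (Lterm k z) (Li k z).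
Proof.
  intro Hz. destruct (isum_comp (Lterm k z) _ _ (fun i => Lterm_bounds k z i (proj1 Hz)) (geom_sum1 z Hz)) as [l [Hl _]].
  rewrite (Li_eq k z l Hl). auto.
Qed.

Lemma Li_bounds k z : 0 <= z < 1 -> 0 <= Li k z <= z / (1 - z).
Proof.
  intro Hz. split.
  - apply isum_nonneg with (Lterm k z). intro i; apply Lterm_bounds; lra. apply Li_spec; auto.
  - apply isum_le with (Lterm k z) (fun i => z ^ S i). intro i; apply Lterm_bounds; lra.
    apply Li_spec; auto. apply geom_sum1; auto.
Qed.

Lemma Li_0 z : 0 <= z < 1 -> Li 0 z = z / (1 - z).
Proof.
  intro Hz. apply Li_eq. apply isum_ext with (fun i => z ^ S i).
  intro i; unfold Lterm; simpl; field. apply geom_sum1; auto.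
Qed.

Lemma Li_mono k a b : 0 <= a <= b -> b < 1 -> Li k a <= Li k b.
Proof.
  intros Hab Hb. apply isum_le with (Lterm k a) (Lterm k b).
  - intro i. unfold Lterm, Rdiv. apply Rmult_le_compat_r.
    left; apply Rinv_0_lt_compat. pose proof (INR_S_pow_ge1 i k); lra.
    apply pow_incr; lra.
  - apply Li_spec; lra.
  - apply Li_spec; lra.
Qed.

Lemma sum_inv_sq n : sum_f_R0 (fun i => / INR (S i) ^ 2) n <= 2 - / INR (S n).
Proof.
  induction n.
  - simpl. lra.
  - rewrite tech5. repeat rewrite S_INR in *.
    pose proof (pos_INR n).
    assert (/ (INR n + 1 + 1) ^ 2 + / (INR n + 1 + 1) <= / (INR n + 1)).
    { apply Rmult_le_reg_r with ((INR n + 1 + 1) ^ 2 * (INR n + 1)).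
      apply Rmult_lt_0_compat. apply pow_lt; lra. lra.
      field_simplify; try lra. }
    lra.
Qed.

Lemma Li_le2 k z : (2 <= k)%nat -> 0 <= z < 1 -> Li k z <= 2.
Proof.
  intros Hk Hz.
  apply cv_le_bound with (sum_f_R0 (Lterm k z)). apply Li_spec; auto.
  intro n. apply Rle_trans with (sum_f_R0 (fun i => / INR (S i) ^ 2) n).
  - apply psum_le. intro i. unfold Lterm, Rdiv.
    assert (0 <= z ^ S i <= 1).
    { split. apply pow_le; lra. left; apply pow_lt1 with (n := i); lra. }
    assert (INR (S i) ^ 2 <= INR (S i) ^ k).
    { replace k with (2 + (k - 2))%nat by lia. rewrite pow_add.
      rewrite <- (Rmult_1_r (INR (S i) ^ 2)) at 1. apply Rmult_le_compat_l.
      apply pow_le, pos_INR. apply INR_S_pow_ge1. }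
    pose proof (INR_S_pow_ge1 i 2).
    apply Rle_trans with (1 * / INR (S i) ^ k).
    apply Rmult_le_compat_r. left; apply Rinv_0_lt_compat; lra. lra.
    rewrite Rmult_1_l. apply Rinv_le_contravar; lra.
  - pose proof (sum_inv_sq n). pose proof (pos_INR (S n)).
    assert (0 < / INR (S n)). apply Rinv_0_lt_compat. rewrite S_INR; pose proof (pos_INR n); lra.
    lra.
Qed.

Lemma pow_diff_le a b n : 0 <= b <= a -> a ^ S n - b ^ S n <= INR (S n) * a ^ n * (a - b).
Proof.
  intro H. induction n.
  - simpl. lra.
  - assert (b ^ S n <= a ^ S n) by (apply pow_incr; lra).
    replace (a ^ S (S n) - b ^ S (S n)) with (a * (a ^ S n - b ^ S n) + b ^ S n * (a - b)) by (simpl; ring).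
    rewrite S_INR.
    apply Rle_trans with (a * (INR (S n) * a ^ n * (a - b)) + a ^ S n * (a - b)).
    apply Rplus_le_compat. apply Rmult_le_compat_l; lra. apply Rmult_le_compat_r; lra.
    simpl. lra.
Qed.

Lemma pow_diff_ge a b n : 0 <= b <= a -> 0 <= a ^ n - b ^ n.
Proof. intro H. assert (b ^ n <= a ^ n) by (apply pow_incr; lra). lra. Qed.

Lemma Li_lip k a b rho : (1 <= k)%nat -> 0 <= a <= b -> b <= rho -> rho < 1 ->
  Li k b - Li k a <= (b - a) / (1 - rho).
Proof.
  intros Hk Hab Hbr Hr.
  assert (H1 : infinite_sum (fun i => Lterm k b i + -1 * Lterm k a i) (Li k b + -1 * Li k a)).
  { apply isum_plus. apply Li_spec; lra. apply isum_scal. apply Li_spec; lra. }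
  assert (H2 : infinite_sum (fun i => (b - a) * rho ^ i) ((b - a) * / (1 - rho))).
  { apply isum_scal. apply geom_sum. lra. }
  replace (Li k b - Li k a) with (Li k b + -1 * Li k a) by ring.
  unfold Rdiv. eapply isum_le; [|exact H1|exact H2].
  intro i. unfold Lterm, Rdiv.
  pose proof (INR_S_pow_ge1 i k) as Hp.
  replace (b ^ S i * / INR (S i) ^ k + -1 * (a ^ S i * / INR (S i) ^ k)) with
     ((b ^ S i - a ^ S i) * / INR (S i) ^ k) by ring.
  assert (HS : INR (S i) <= INR (S i) ^ k).
  { replace k with (1 + (k - 1))%nat by lia. rewrite pow_add, pow_1.
    rewrite <- (Rmult_1_r (INR (S i))) at 1. apply Rmult_le_compat_l.
    apply pos_INR. apply INR_S_pow_ge1. }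
  assert (HS0 : 0 < INR (S i)) by (rewrite S_INR; pose proof (pos_INR i); lra).
  pose proof (pow_diff_le b a i ltac:(lra)).
  pose proof (pow_diff_ge b a (S i) ltac:(lra)).
  assert (b ^ i <= rho ^ i) by (apply pow_incr; lra).
  apply Rle_trans with (INR (S i) * b ^ i * (b - a) * / INR (S i) ^ k).
  apply Rmult_le_compat_r. left; apply Rinv_0_lt_compat; lra. auto.
  apply Rle_trans with (INR (S i) * b ^ i * (b - a) * / INR (S i)).
  apply Rmult_le_compat_l. apply Rmult_le_pos. apply Rmult_le_pos. lra. apply pow_le; lra. lra.
  apply Rinv_le_contravar; lra.
  replace (INR (S i) * b ^ i * (b - a) * / INR (S i)) with (b ^ i * (b - a)) by (field; lra).
  rewrite Rmult_comm. apply Rmult_le_compat_l; lra.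
Qed.

Lemma pow_le1 x n : 0 <= x <= 1 -> x ^ n <= 1.
Proof. intro H. induction n; simpl. lra. replace 1 with (1*1) by ring. apply Rmult_le_compat; try lra. apply pow_le; lra. Qed.

Lemma pow_ge1 x n : 1 <= x -> 1 <= x ^ n.
Proof. intro H. induction n; simpl. lra. replace 1 with (1*1) by ring. apply Rmult_le_compat; lra. Qed.

Lemma phi_lower d x : (1 <= d)%nat -> 0 < x ->
  1 + (/ x) ^ d - (/ x) ^ (d - 1) <= / (1 - exp (- x)) ^ d.
Proof.
  intros Hd Hx.
  pose proof (exp_ineq1_le (- x)). pose proof (exp_pos (- x)).
  assert (Hu : exp (- x) < 1) by (apply exp_neg_lt1; lra).
  rewrite <- pow_inv.
  destruct (Rle_dec x 1) as [H1|H1].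
  - assert (Hy : 1 <= / x). { rewrite <- Rinv_1. apply Rinv_le_contravar; lra. }
    assert (1 <= (/ x) ^ (d - 1)) by (apply pow_ge1; lra).
    assert ((/ x) ^ d <= (/ (1 - exp (- x))) ^ d).
    { apply pow_incr. split. left; apply Rinv_0_lt_compat; lra. apply Rinv_le_contravar; lra. }
    lra.
  - assert (Hy : 0 < / x <= 1). { split. apply Rinv_0_lt_compat; lra. rewrite <- Rinv_1. apply Rinv_le_contravar; lra. }
    assert ((/ x) ^ d <= (/ x) ^ (d - 1)).
    { replace d with (S (d - 1)) at 1 by lia. simpl.
      rewrite <- (Rmult_1_l ((/ x) ^ (d - 1))) at 2. apply Rmult_le_compat_r. apply pow_le; lra. lra. }
    assert (1 <= (/ (1 - exp (- x))) ^ d).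
    { apply pow_ge1. rewrite <- Rinv_1. apply Rinv_le_contravar; lra. }
    lra.
Qed.

Lemma exp1_ge2 : 2 <= exp 1.
Proof. pose proof (exp_ineq1_le 1). lra. Qed.

Lemma phi_upper d x : (1 <= d)%nat -> 0 < x ->
  / (1 - exp (- x)) ^ d <= 1 + (/ x) ^ d + INR d * 2 ^ (d - 1) * (/ x) ^ (d - 1)
     + INR d * 2 ^ d * exp (- x).
Proof.
  intros Hd Hx.
  pose proof (exp_ineq1_le x). pose proof (exp_pos (- x)).
  assert (Hu : exp (- x) < 1) by (apply exp_neg_lt1; lra).
  assert (Hxu : exp (- x) * exp x = 1). { rewrite <- exp_plus. replace (-x + x) with 0 by ring. apply exp_0. }
  assert (Hd1 : 0 <= INR d) by apply pos_INR.
  assert (Hp1 : 0 < 2 ^ (d - 1)) by (apply pow_lt; lra).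
  assert (Hp2 : 0 < 2 ^ d) by (apply pow_lt; lra).
  rewrite <- pow_inv.
  replace d with (S (d - 1)) at 1 2 4 by lia.
  set (n := (d - 1)%nat).
  replace d with (S n) by (unfold n; lia).
  assert (Hn1 : 0 <= (/ x) ^ n) by (apply pow_le; left; apply Rinv_0_lt_compat; lra).
  destruct (Rle_dec x 1) as [H1|H1].
  - set (y := / x).
    assert (Hy : 1 <= y). { unfold y; rewrite <- Rinv_1. apply Rinv_le_contravar; lra. }
    assert (Ha : / (1 - exp (- x)) <= 1 + y).
    { unfold y. assert (1 - exp (- x) >= x / (1 + x)).
      { assert (exp (- x) <= / (1 + x)).
        { apply Rmult_le_reg_r with (1 + x). lra. rewrite Rinv_l by lra.
          apply Rle_trans with (exp (- x) * exp x). apply Rmult_le_compat_l; lra. lra. }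
        assert (/ (1 + x) = 1 - x / (1 + x)) by (field; lra). lra. }
      replace (1 + / x) with (/ (x / (1 + x))) by (field; lra).
      apply Rinv_le_contravar. apply Rdiv_lt_0_compat; lra. lra. }
    assert (HaP : (/ (1 - exp (- x))) ^ S n <= (1 + y) ^ S n).
    { apply pow_incr. split; auto. left; apply Rinv_0_lt_compat; lra. }
    pose proof (pow_diff_le (1 + y) y n ltac:(lra)).
    assert ((1 + y) ^ n <= (2 * y) ^ n) by (apply pow_incr; lra).
    rewrite Rpow_mult_distr in H3.
    assert (0 <= INR (S n)) by apply pos_INR.
    assert (INR (S n) * (1 + y) ^ n * (1 + y - y) <= INR (S n) * (2 ^ n * y ^ n)).
    { replace (1 + y - y) with 1 by ring. rewrite Rmult_1_r. apply Rmult_le_compat_l; lra. }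
    assert (0 <= INR (S n) * 2 ^ S n * exp (- x)).
    { apply Rmult_le_pos. apply Rmult_le_pos. auto. apply pow_le; lra. lra. }
    fold y. replace (S n - 1)%nat with n by lia. rewrite <- Rmult_assoc in H5. lra.
  -
    assert (Hu2 : exp (- x) <= / 2).
    { apply Rle_trans with (exp (Ropp 1)). left; apply exp_increasing; lra.
      rewrite exp_Ropp. apply Rinv_le_contravar. lra. apply exp1_ge2. }
    set (a := / (1 - exp (- x))).
    assert (Ha1 : 1 <= a). { unfold a; rewrite <- Rinv_1. apply Rinv_le_contravar; lra. }
    assert (Ha2 : a <= 2). { unfold a. replace 2 with (/ / 2) by (field). apply Rinv_le_contravar; lra. }
    assert (Ha3 : a - 1 <= 2 * exp (- x)).
    { unfold a. replace (/ (1 - exp (- x)) - 1) with (exp (- x) / (1 - exp (- x))) by (field; lra).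
      unfold Rdiv. rewrite Rmult_comm. apply Rmult_le_compat_r. lra.
      replace 2 with (/ / 2) by (field). apply Rinv_le_contravar; lra. }
    pose proof (pow_diff_le a 1 n ltac:(lra)) as Hq1. rewrite pow1 in Hq1.
    assert (a ^ n <= 2 ^ n) by (apply pow_incr; lra).
    assert (0 <= INR (S n)) by apply pos_INR.
    assert (INR (S n) * a ^ n * (a - 1) <= INR (S n) * 2 ^ n * (2 * exp (- x))).
    { apply Rmult_le_compat. apply Rmult_le_pos; auto. apply pow_le; lra. lra.
      apply Rmult_le_compat_l; lra. lra. }
    assert (0 <= INR (S n) * 2 ^ n * (/ x) ^ n).
    { apply Rmult_le_pos. apply Rmult_le_pos; [lra| apply pow_le; lra]. auto. }
    assert (0 <= (/ x) ^ S n) by (apply pow_le; left; apply Rinv_0_lt_compat; lra).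
    replace (2 ^ S n) with (2 * 2 ^ n) by (simpl; ring).
    replace (S n - 1)%nat with n by lia. lra.
Qed.

Definition Cb (d : nat) (beta : R) : R :=
  2 * (INR d * 2 ^ (d - 1) + 1) / beta ^ (d - 1) + INR d * 2 ^ d / beta.

Lemma Cb_pos d beta : 0 < beta -> 0 < Cb d beta.
Proof.
  intro Hb. unfold Cb. pose proof (pos_INR d).
  assert (0 < 2 ^ (d-1)) by (apply pow_lt; lra). assert (0 < 2 ^ d) by (apply pow_lt; lra).
  assert (0 < beta ^ (d-1)) by (apply pow_lt; lra).
  apply Rplus_lt_le_0_compat. apply Rdiv_lt_0_compat; nra.
  unfold Rdiv; apply Rmult_le_pos. nra. left; apply Rinv_0_lt_compat; lra.
Qed.

Lemma qk_bound beta kappa : 0 < beta -> 0 < kappa ->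
  0 < qk beta kappa < 1 /\ qk beta kappa / (1 - qk beta kappa) <= kappa / beta.
Proof.
  intros Hb Hk. set (t := beta / kappa). assert (Ht : 0 < t) by (apply Rdiv_lt_0_compat; lra).
  unfold qk. fold t.
  pose proof (exp_neg_lt1 t Ht) as Hq. split; auto.
  pose proof (exp_ineq1_le t).
  assert (Hxu : exp (- t) * exp t = 1). { rewrite <- exp_plus. replace (-t + t) with 0 by ring. apply exp_0. }
  replace (kappa / beta) with (/ t) by (unfold t; field; lra).
  apply Rmult_le_reg_r with ((1 - exp (- t)) * t). apply Rmult_lt_0_compat; lra.
  replace (exp (- t) / (1 - exp (- t)) * ((1 - exp (- t)) * t)) with (exp (-t) * t) by (field; lra).
  replace (/ t * ((1 - exp (- t)) * t)) with (1 - exp (- t)) by (field; lra).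
  nra.
Qed.

Lemma trace_bounds d beta kappa r s : (3 <= d)%nat -> 0 < beta -> 1 <= kappa -> 0 < r < 1 ->
  TraceVal d beta kappa r s ->
  r / (kappa ^ d * (1 - r)) + Li d r / beta ^ d - Cb d beta / kappa <= s / kappa ^ d /\
  s / kappa ^ d <= r / (kappa ^ d * (1 - r)) + Li d r / beta ^ d + Cb d beta / kappa.
Proof.
  intros Hd Hb Hk Hr HT.
  pose proof (trace_closed d beta kappa r s Hb ltac:(lra) Hr HT) as Hs.
  destruct (qk_bound beta kappa Hb ltac:(lra)) as [Hq Hqb].
  set (q := qk beta kappa) in *.
  destruct d as [|m]; [lia|].
  assert (Hkm : 0 < kappa ^ m) by (apply pow_lt; lra).
  assert (Hbm : 0 < beta ^ m) by (apply pow_lt; lra).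
  assert (HkS : kappa ^ S m = kappa * kappa ^ m) by reflexivity.
  assert (HbS : beta ^ S m = beta * beta ^ m) by reflexivity.
  assert (Hs' : infinite_sum (fun i => / kappa ^ S m * (r ^ S i * / (1 - q ^ S i) ^ S m)) (/ kappa ^ S m * s))
    by (apply isum_scal; auto).
  assert (S1 : infinite_sum (fun i => / kappa ^ S m * r ^ S i) (/ kappa ^ S m * (r / (1 - r))))
    by (apply isum_scal; apply geom_sum1; lra).
  assert (S2 : infinite_sum (fun i => / beta ^ S m * Lterm (S m) r i) (/ beta ^ S m * Li (S m) r))
    by (apply isum_scal; apply Li_spec; lra).
  assert (S3 : forall c, infinite_sum (fun i => c * Lterm m r i) (c * Li m r))
    by (intro; apply isum_scal; apply Li_spec; lra).
  assert (S4 : infinite_sum (fun i => INR (S m) * 2 ^ S m / kappa ^ S m * q ^ S i)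
                  (INR (S m) * 2 ^ S m / kappa ^ S m * (q / (1 - q))))
    by (apply isum_scal; apply geom_sum1; lra).
  assert (HLm : 0 <= Li m r <= 2).
  { split. apply (Li_bounds m r); lra. apply Li_le2; lia || lra. }
  assert (Hx : forall i, 0 < beta * INR (S i) / kappa).
  { intro i. apply Rdiv_lt_0_compat; [|lra]. apply Rmult_lt_0_compat; auto.
    rewrite S_INR; pose proof (pos_INR i); lra. }
  assert (Hqx : forall i, q ^ S i = exp (- (beta * INR (S i) / kappa))).
  { intro i. unfold q, qk. rewrite <- exp_INR_mult. f_equal. field. lra. }
  assert (HiS : forall i, 0 < INR (S i)) by (intro i; rewrite S_INR; pose proof (pos_INR i); lra).
  assert (Hid1 : forall i, / kappa ^ S m * (r ^ S i * (/ (beta * INR (S i) / kappa)) ^ S m)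
                      = / beta ^ S m * Lterm (S m) r i).
  { intro i. unfold Lterm. replace (/ (beta * INR (S i) / kappa)) with (kappa * / beta * / INR (S i))
      by (specialize (HiS i); field; repeat split; nra).
    rewrite !Rpow_mult_distr, !pow_inv. specialize (HiS i). field.
    repeat split; apply pow_nonzero; lra. }
  assert (Hid2 : forall i, / kappa ^ S m * (r ^ S i * (/ (beta * INR (S i) / kappa)) ^ m)
                      = / (kappa * beta ^ m) * Lterm m r i).
  { intro i. unfold Lterm. replace (/ (beta * INR (S i) / kappa)) with (kappa * / beta * / INR (S i))
      by (specialize (HiS i); field; repeat split; nra).
    rewrite !Rpow_mult_distr, !pow_inv. rewrite HkS. specialize (HiS i). field.
    repeat split; try apply pow_nonzero; lra. }
  replace (S m - 1)%nat with m in * by lia.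
  assert (Hrk : 0 <= / kappa ^ S m * r / (1 - r)).
  { unfold Rdiv. apply Rmult_le_pos. apply Rmult_le_pos. left; apply Rinv_0_lt_compat; rewrite HkS; nra. lra.
    left; apply Rinv_0_lt_compat; lra. }
  replace (r / (kappa ^ S m * (1 - r))) with (/ kappa ^ S m * (r / (1 - r))) by (field; split; [lra| rewrite HkS; nra]).
  replace (s / kappa ^ S m) with (/ kappa ^ S m * s) by (unfold Rdiv; ring).
  replace (Li (S m) r / beta ^ S m) with (/ beta ^ S m * Li (S m) r) by (unfold Rdiv; ring).
  assert (HC1 : 2 / (kappa * beta ^ m) <= Cb (S m) beta / kappa).
  { unfold Cb. replace (S m - 1)%nat with m by lia.
    assert (0 <= INR (S m) * 2 ^ m) by (apply Rmult_le_pos; [apply pos_INR| apply pow_le; lra]).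
    assert (0 <= INR (S m) * 2 ^ S m / beta) by (unfold Rdiv; apply Rmult_le_pos; [apply Rmult_le_pos; [apply pos_INR| apply pow_le; lra]| left; apply Rinv_0_lt_compat; lra]).
    apply Rmult_le_reg_r with kappa. lra.
    replace (2 / (kappa * beta ^ m) * kappa) with (2 / beta ^ m) by (field; lra).
    replace ((2 * (INR (S m) * 2 ^ m + 1) / beta ^ m + INR (S m) * 2 ^ S m / beta) / kappa * kappa)
      with (2 * (INR (S m) * 2 ^ m) / beta ^ m + 2 / beta ^ m + INR (S m) * 2 ^ S m / beta) by (field; lra).
    assert (0 <= 2 * (INR (S m) * 2 ^ m) / beta ^ m) by (unfold Rdiv; apply Rmult_le_pos; [lra| left; apply Rinv_0_lt_compat; lra]).
    lra. }
  assert (Hc0 : forall i, 0 <= / kappa ^ S m * r ^ S i).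
  { intro i. apply Rmult_le_pos. left; apply Rinv_0_lt_compat; rewrite HkS; nra. apply pow_le; lra. }
  assert (Hsm : (S m - 1)%nat = m) by lia.
  split.
  -
    pose proof (isum_plus _ _ _ _ (isum_plus _ _ _ _ S1 S2) (S3 (- / (kappa * beta ^ m)))) as Hlow.
    assert (Hle : / kappa ^ S m * (r / (1 - r)) + / beta ^ S m * Li (S m) r + - / (kappa * beta ^ m) * Li m r
                  <= / kappa ^ S m * s).
    { eapply isum_le; [|exact Hlow|exact Hs'].
      intro i. cbv beta. rewrite Hqx.
      pose proof (phi_lower (S m) _ ltac:(lia) (Hx i)) as Hp. rewrite Hsm in Hp.
      set (y := / (beta * INR (S i) / kappa)) in *.
      assert (E : / kappa ^ S m * r ^ S i + / beta ^ S m * Lterm (S m) r i + - / (kappa * beta ^ m) * Lterm m r i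
                  = / kappa ^ S m * (r ^ S i * (1 + y ^ S m - y ^ m))).
      { rewrite <- Hid1. replace (- / (kappa * beta ^ m) * Lterm m r i) with (- (/ (kappa * beta ^ m) * Lterm m r i)) by ring.
        rewrite <- Hid2. unfold y. ring. }
      rewrite E. rewrite <- Rmult_assoc. rewrite <- (Rmult_assoc _ (r ^ S i)).
      apply Rmult_le_compat_l; auto. }
    assert (2 / (kappa * beta ^ m) >= / (kappa * beta ^ m) * Li m r).
    { unfold Rdiv. rewrite Rmult_comm. apply Rle_ge. apply Rmult_le_compat_l; [|lra].
      left; apply Rinv_0_lt_compat; nra. }
    lra.
  -
    set (c3 := INR (S m) * 2 ^ m / (kappa * beta ^ m)).
    pose proof (isum_plus _ _ _ _ (isum_plus _ _ _ _ (isum_plus _ _ _ _ S1 S2) (S3 c3)) S4) as Hup.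
    assert (Hle : / kappa ^ S m * s <= / kappa ^ S m * (r / (1 - r)) + / beta ^ S m * Li (S m) r + c3 * Li m r
                    + INR (S m) * 2 ^ S m / kappa ^ S m * (q / (1 - q))).
    { eapply isum_le; [|exact Hs'|exact Hup].
      intro i. cbv beta.
      pose proof (phi_upper (S m) _ ltac:(lia) (Hx i)) as Hp. rewrite Hsm in Hp.
      rewrite Hqx.
      set (x := beta * INR (S i) / kappa) in *.
      set (y := / x) in *.
      assert (E : / kappa ^ S m * r ^ S i + / beta ^ S m * Lterm (S m) r i + c3 * Lterm m r i
                  = / kappa ^ S m * (r ^ S i * (1 + y ^ S m + INR (S m) * 2 ^ m * y ^ m))).
      { rewrite <- Hid1. unfold c3. replace (INR (S m) * 2 ^ m / (kappa * beta ^ m) * Lterm m r i)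
          with (INR (S m) * 2 ^ m * (/ (kappa * beta ^ m) * Lterm m r i)) by (unfold Rdiv; ring).
        rewrite <- Hid2. fold x y. ring. }
      rewrite E.
      assert (Hr1 : r ^ S i <= 1) by (apply pow_le1; lra).
      assert (He : 0 <= exp (- x)) by (left; apply exp_pos).
      assert (H1 : / kappa ^ S m * r ^ S i * (INR (S m) * 2 ^ S m * exp (- x))
                 <= INR (S m) * 2 ^ S m / kappa ^ S m * exp (- x)).
      { replace (INR (S m) * 2 ^ S m / kappa ^ S m * exp (- x)) with
          (/ kappa ^ S m * 1 * (INR (S m) * 2 ^ S m * exp (- x))) by (unfold Rdiv; ring).
        apply Rmult_le_compat_r. apply Rmult_le_pos. apply Rmult_le_pos. apply pos_INR. apply pow_le; lra. auto.
        apply Rmult_le_compat_l. left; apply Rinv_0_lt_compat; rewrite HkS; nra. auto. }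
      assert (H2 : / kappa ^ S m * r ^ S i * / (1 - exp (- x)) ^ S m <=
                   / kappa ^ S m * r ^ S i * (1 + y ^ S m + INR (S m) * 2 ^ m * y ^ m + INR (S m) * 2 ^ S m * exp (- x))).
      { apply Rmult_le_compat_l; auto. }
      rewrite Rmult_plus_distr_l in H2. rewrite <- Rmult_assoc. lra. }
    assert (H3 : c3 * Li m r <= 2 * INR (S m) * 2 ^ m / (kappa * beta ^ m)).
    { unfold c3. unfold Rdiv. replace (2 * INR (S m) * 2 ^ m * / (kappa * beta ^ m)) with
       (INR (S m) * 2 ^ m * / (kappa * beta ^ m) * 2) by ring.
      apply Rmult_le_compat_l; [|lra]. apply Rmult_le_pos. apply Rmult_le_pos. apply pos_INR. apply pow_le; lra.
      left; apply Rinv_0_lt_compat; nra. }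
    assert (Hkm1 : kappa <= kappa ^ m).
    { destruct m; [lia|]. simpl. rewrite <- (Rmult_1_r kappa) at 1. apply Rmult_le_compat_l; [lra|].
      apply pow_ge1; lra. }
    assert (H4 : INR (S m) * 2 ^ S m / kappa ^ S m * (q / (1 - q)) <= INR (S m) * 2 ^ S m / beta / kappa).
    { assert (0 <= INR (S m) * 2 ^ S m) by (apply Rmult_le_pos; [apply pos_INR| apply pow_le; lra]).
      apply Rle_trans with (INR (S m) * 2 ^ S m / kappa ^ S m * (kappa / beta)).
      apply Rmult_le_compat_l; auto. unfold Rdiv. apply Rmult_le_pos; auto. left; apply Rinv_0_lt_compat; rewrite HkS; nra.
      rewrite HkS. replace (INR (S m) * 2 ^ S m / (kappa * kappa ^ m) * (kappa / beta)) with
        (INR (S m) * 2 ^ S m / beta * / kappa ^ m) by (field; lra).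
      unfold Rdiv at 2. apply Rmult_le_compat_l. unfold Rdiv; apply Rmult_le_pos; auto. left; apply Rinv_0_lt_compat; lra.
      apply Rinv_le_contravar; lra. }
    assert (HC2 : 2 * INR (S m) * 2 ^ m / (kappa * beta ^ m) + INR (S m) * 2 ^ S m / beta / kappa <= Cb (S m) beta / kappa).
    { unfold Cb. rewrite Hsm.
      apply Rmult_le_reg_r with kappa. lra.
      replace ((2 * INR (S m) * 2 ^ m / (kappa * beta ^ m) + INR (S m) * 2 ^ S m / beta / kappa) * kappa)
        with (2 * (INR (S m) * 2 ^ m) / beta ^ m + INR (S m) * 2 ^ S m / beta) by (field; lra).
      replace ((2 * (INR (S m) * 2 ^ m + 1) / beta ^ m + INR (S m) * 2 ^ S m / beta) / kappa * kappa)
        with (2 * (INR (S m) * 2 ^ m) / beta ^ m + 2 / beta ^ m + INR (S m) * 2 ^ S m / beta) by (field; lra).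
      assert (0 <= 2 / beta ^ m) by (unfold Rdiv; apply Rmult_le_pos; [lra| left; apply Rinv_0_lt_compat; lra]).
      lra. }
    lra.
Qed.

Lemma Li_le_zeta d z zeta : ZetaVal d zeta -> 0 <= z < 1 -> Li d z <= zeta.
Proof.
  intros HZ Hz. apply isum_le with (Lterm d z) (fun k => / INR (S k) ^ d); auto.
  - intro i. unfold Lterm, Rdiv. rewrite <- (Rmult_1_l (/ INR (S i) ^ d)) at 2.
    apply Rmult_le_compat_r. left; apply Rinv_0_lt_compat; pose proof (INR_S_pow_ge1 i d); lra.
    apply pow_le1; lra.
  - apply Li_spec; auto.
Qed.

Lemma zeta_nonneg d zeta : ZetaVal d zeta -> 0 <= zeta.
Proof.
  intro HZ. apply isum_nonneg with (fun k => / INR (S k) ^ d); auto.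
  intro i. left; apply Rinv_0_lt_compat; pose proof (INR_S_pow_ge1 i d); lra.
Qed.

Lemma Li_to_zeta d zeta : ZetaVal d zeta -> forall eps, 0 < eps ->
  exists delta, 0 < delta < 1 /\ forall z, 1 - delta <= z < 1 -> zeta - eps < Li d z.
Proof.
  intros HZ eps He.
  pose proof (zeta_nonneg d zeta HZ) as Hz0.
  destruct (HZ (eps / 2) ltac:(lra)) as [N HN].
  specialize (HN N (Nat.le_refl N)). unfold Rdist in HN.
  set (P := sum_f_R0 (fun k => / INR (S k) ^ d) N) in *.
  assert (HP : 0 <= P <= zeta).
  { split. apply psum_nonneg. intro i. left; apply Rinv_0_lt_compat; pose proof (INR_S_pow_ge1 i d); lra.
    apply isum_le_lim; auto. intro i. left; apply Rinv_0_lt_compat; pose proof (INR_S_pow_ge1 i d); lra. }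
  assert (HSN : 0 < INR (S N)) by (rewrite S_INR; pose proof (pos_INR N); lra).
  set (delta := Rmin (1/2) (eps / (2 * INR (S N) * (zeta + 1)))).
  assert (Hd0 : 0 < eps / (2 * INR (S N) * (zeta + 1))) by (apply Rdiv_lt_0_compat; nra).
  exists delta. split. unfold delta; split. apply Rmin_glb_lt; lra. apply Rle_lt_trans with (1/2). apply Rmin_l. lra.
  intros z Hz.
  assert (Hz0' : 0 <= z) by (pose proof (Rmin_l (1/2) (eps / (2 * INR (S N) * (zeta + 1)))); unfold delta in Hz; lra).
  assert (H1 : z ^ S N * P <= Li d z).
  { apply Rle_trans with (sum_f_R0 (Lterm d z) N).
    - unfold P. rewrite scal_sum. apply sum_Rle. intros i Hi. unfold Lterm, Rdiv.
      rewrite (Rmult_comm (z ^ S i)). apply Rmult_le_compat_l.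
      left; apply Rinv_0_lt_compat; pose proof (INR_S_pow_ge1 i d); lra.
      replace (S N) with (S i + (N - i))%nat by lia. rewrite pow_add.
      rewrite <- (Rmult_1_r (z ^ S i)) at 2. apply Rmult_le_compat_l. apply pow_le; lra.
      apply pow_le1; lra.
    - apply isum_le_lim. intro i; apply Lterm_bounds; lra. apply Li_spec; lra. }
  pose proof (pow_diff_le 1 z N ltac:(lra)) as H2. rewrite pow1, pow1 in H2.
  assert (H3 : (1 - z) * INR (S N) * (zeta + 1) <= eps / 2).
  { apply Rle_trans with (delta * INR (S N) * (zeta + 1)).
    apply Rmult_le_compat_r. lra. apply Rmult_le_compat_r; lra.
    apply Rle_trans with (eps / (2 * INR (S N) * (zeta + 1)) * INR (S N) * (zeta + 1)).
    apply Rmult_le_compat_r. lra. apply Rmult_le_compat_r. lra. apply Rmin_r.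
    right. field. split; lra. }
  assert (H4 : (1 - z ^ S N) * P <= (1 - z) * INR (S N) * (zeta + 1)).
  { apply Rle_trans with (INR (S N) * (1 - z) * P). apply Rmult_le_compat_r; lra.
    replace ((1 - z) * INR (S N) * (zeta + 1)) with (INR (S N) * (1 - z) * (zeta + 1)) by ring.
    apply Rmult_le_compat_l. apply Rmult_le_pos; lra. lra. }
  assert (Rabs (P - zeta) < eps / 2) by auto.
  apply Rabs_def2 in H. lra.
Qed.

Definition Fn (d : nat) (beta lambda : R) (t : R) : R := ln t / (beta * lambda) + Li d t / beta ^ d.

Lemma Fn_strict d beta lambda a b : 0 < beta -> 0 < lambda -> 0 < a < b -> b < 1 ->
  Fn d beta lambda a < Fn d beta lambda b.
Proof.
  intros Hb Hl Hab Hb1. unfold Fn.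
  assert (ln a < ln b) by (apply ln_increasing; lra).
  assert (Li d a <= Li d b) by (apply Li_mono; lra).
  assert (0 < beta ^ d) by (apply pow_lt; lra).
  assert (ln a / (beta * lambda) < ln b / (beta * lambda)).
  { unfold Rdiv. apply Rmult_lt_compat_r. apply Rinv_0_lt_compat; nra. auto. }
  assert (Li d a / beta ^ d <= Li d b / beta ^ d).
  { unfold Rdiv. apply Rmult_le_compat_r. left; apply Rinv_0_lt_compat; nra. auto. }
  lra.
Qed.

Lemma Fn_mono d beta lambda a b : 0 < beta -> 0 < lambda -> 0 < a <= b -> b < 1 ->
  Fn d beta lambda a <= Fn d beta lambda b.
Proof.
  intros. destruct (Req_dec a b). subst; lra. left; apply Fn_strict; lra.
Qed.

Lemma ln_lt0 t : 0 < t < 1 -> ln t < 0.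
Proof. intro H. rewrite <- ln_1. apply ln_increasing; lra. Qed.

Lemma ln_ge t : 0 < t -> 1 - / t <= ln t.
Proof.
  intro Ht. pose proof (exp_ineq1_le (- ln t)). rewrite exp_Ropp, exp_ln in H by auto. lra.
Qed.

Lemma Fn_lt_zeta d beta lambda zeta t : 0 < beta -> 0 < lambda -> ZetaVal d zeta -> 0 < t < 1 ->
  Fn d beta lambda t < zeta / beta ^ d.
Proof.
  intros Hb Hl HZ Ht. unfold Fn.
  pose proof (ln_lt0 t Ht). pose proof (Li_le_zeta d t zeta HZ ltac:(lra)).
  assert (0 < beta ^ d) by (apply pow_lt; lra).
  assert (ln t / (beta * lambda) < 0).
  { unfold Rdiv. assert (0 < / (beta * lambda)) by (apply Rinv_0_lt_compat; nra). nra. }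
  assert (Li d t / beta ^ d <= zeta / beta ^ d).
  { unfold Rdiv. apply Rmult_le_compat_r. left; apply Rinv_0_lt_compat; lra. auto. }
  lra.
Qed.

Lemma Fn_near1 d beta lambda zeta : 0 < beta -> 0 < lambda -> ZetaVal d zeta ->
  forall eps, 0 < eps -> exists delta, 0 < delta < 1 /\
   forall t, 1 - delta <= t < 1 -> zeta / beta ^ d - eps < Fn d beta lambda t.
Proof.
  intros Hb Hl HZ eps He.
  assert (HB : 0 < beta ^ d) by (apply pow_lt; lra).
  destruct (Li_to_zeta d zeta HZ (eps * beta ^ d / 2) ltac:(apply Rdiv_lt_0_compat; nra)) as [d1 [Hd1 H1]].
  set (delta := Rmin d1 (Rmin (1/2) (eps * beta * lambda / 8))).
  assert (Hd2 : 0 < eps * beta * lambda / 8) by (apply Rdiv_lt_0_compat; [|lra]; apply Rmult_lt_0_compat; nra).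
  assert (Hdl : delta <= d1 /\ delta <= 1/2 /\ delta <= eps * beta * lambda / 8).
  { unfold delta. pose proof (Rmin_l d1 (Rmin (1/2) (eps * beta * lambda / 8))).
    pose proof (Rmin_r d1 (Rmin (1/2) (eps * beta * lambda / 8))).
    pose proof (Rmin_l (1/2) (eps * beta * lambda / 8)). pose proof (Rmin_r (1/2) (eps * beta * lambda / 8)). lra. }
  exists delta. split. split. unfold delta. apply Rmin_glb_lt. lra. apply Rmin_glb_lt; lra. lra.
  intros t Ht.
  specialize (H1 t ltac:(lra)).
  unfold Fn.
  pose proof (ln_ge t ltac:(lra)).
  assert (Hlt : - (eps / 2) < ln t / (beta * lambda)).
  { apply Rmult_lt_reg_r with (beta * lambda). nra.
    unfold Rdiv. rewrite Rmult_assoc, Rinv_l by nra. rewrite Rmult_1_r.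
    assert (1 - / t >= - (2 * (1 - t))).
    { assert (/ t <= 2) by (replace 2 with (/ (1/2)) by field; apply Rinv_le_contravar; lra).
      replace (1 - / t) with (- ((1 - t) * / t)) by (field; lra).
      apply Ropp_le_ge_contravar. rewrite (Rmult_comm 2). apply Rmult_le_compat_l; lra. }
    nra. }
  assert (Hli : zeta / beta ^ d - eps / 2 < Li d t / beta ^ d).
  { apply Rmult_lt_reg_r with (beta ^ d). auto.
    unfold Rdiv. rewrite !Rmult_minus_distr_r, !Rmult_assoc, Rinv_l by lra. rewrite !Rmult_1_r.
    lra. }
  lra.
Qed.

Lemma Li_cont d t : (1 <= d)%nat -> 0 < t < 1 -> continuity_pt (Li d) t.
Proof.
  intros Hd Ht. unfold continuity_pt, continue_in, limit1_in, limit_in. simpl. unfold Rdist.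
  intros eps He.
  set (rho := (1 + t) / 2).
  exists (Rmin ((1 - t) / 2) (Rmin t (eps * (1 - rho)))).
  assert (Hr : 0 < 1 - rho) by (unfold rho; lra).
  split. apply Rmin_glb_lt. lra. apply Rmin_glb_lt. lra. nra.
  intros x [_ Hx].
  pose proof (Rmin_l ((1 - t) / 2) (Rmin t (eps * (1 - rho)))).
  pose proof (Rmin_r ((1 - t) / 2) (Rmin t (eps * (1 - rho)))).
  pose proof (Rmin_l t (eps * (1 - rho))). pose proof (Rmin_r t (eps * (1 - rho))).
  apply Rabs_def2 in Hx. destruct Hx as [Hx1 Hx2].
  assert (Hxr : x < rho) by (unfold rho; lra).
  destruct (Rle_dec x t).
  - pose proof (Li_lip d x t rho Hd ltac:(lra) ltac:(unfold rho; lra) ltac:(unfold rho; lra)).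
    pose proof (Li_mono d x t ltac:(lra) ltac:(lra)).
    rewrite Rabs_left1 by lra.
    assert ((t - x) / (1 - rho) < eps).
    { apply Rmult_lt_reg_r with (1 - rho). auto. unfold Rdiv. rewrite Rmult_assoc, Rinv_l by lra. lra. }
    lra.
  - pose proof (Li_lip d t x rho Hd ltac:(lra) ltac:(unfold rho; lra) ltac:(unfold rho; lra)).
    pose proof (Li_mono d t x ltac:(lra) ltac:(lra)).
    rewrite Rabs_right by lra.
    assert ((x - t) / (1 - rho) < eps).
    { apply Rmult_lt_reg_r with (1 - rho). auto. unfold Rdiv. rewrite Rmult_assoc, Rinv_l by lra. lra. }
    lra.
Qed.

Lemma Fn_cont d beta lambda t : (1 <= d)%nat -> 0 < t < 1 -> continuity_pt (Fn d beta lambda) t.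
Proof.
  intros Hd Ht. unfold Fn.
  apply continuity_pt_plus.
  - apply continuity_pt_mult. apply derivable_continuous_pt. exists (/ t). apply derivable_pt_lim_ln. lra.
    apply continuity_pt_const. intros a b; reflexivity.
  - apply continuity_pt_mult. apply Li_cont; auto.
    apply continuity_pt_const. intros a b; reflexivity.
Qed.

Lemma ln_le' x y : 0 < x -> x <= y -> ln x <= ln y.
Proof. intros H1 [H2|H2]. left; apply ln_increasing; lra. subst; lra. Qed.

Lemma Fn_small d beta lambda c : 0 < beta -> 0 < lambda ->
  exists a, 0 < a <= 1/2 /\ Fn d beta lambda a < c.
Proof.
  intros Hb Hl.
  assert (HB : 0 < beta ^ d) by (apply pow_lt; lra).
  set (a := Rmin (1/2) (exp (beta * lambda * (c - / beta ^ d - 1)))).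
  assert (Ha : 0 < a <= 1/2).
  { unfold a. split. apply Rmin_glb_lt. lra. apply exp_pos. apply Rmin_l. }
  exists a. split; auto. unfold Fn.
  assert (ln a <= beta * lambda * (c - / beta ^ d - 1)).
  { rewrite <- (ln_exp (beta * lambda * (c - / beta ^ d - 1))). apply ln_le'. lra. apply Rmin_r. }
  assert (ln a / (beta * lambda) <= c - / beta ^ d - 1).
  { apply Rmult_le_reg_r with (beta * lambda). nra. unfold Rdiv. rewrite Rmult_assoc, Rinv_l by nra. lra. }
  pose proof (Li_bounds d a ltac:(lra)).
  assert (a / (1 - a) <= 1) by (apply Rmult_le_reg_r with (1 - a); [lra|]; unfold Rdiv; rewrite Rmult_assoc, Rinv_l by lra; lra).
  assert (Li d a / beta ^ d <= / beta ^ d).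
  { unfold Rdiv. rewrite <- (Rmult_1_l (/ beta ^ d)) at 2. apply Rmult_le_compat_r. left; apply Rinv_0_lt_compat; lra. lra. }
  lra.
Qed.

Lemma key d beta lambda mu r : (3 <= d)%nat -> 0 < beta -> 0 < lambda ->
  IsRkappa d beta lambda mu r -> forall kappa, 1 <= kappa ->
  0 < r kappa < 1 /\
  Rabs (mu / lambda - Fn d beta lambda (r kappa) - r kappa / (kappa ^ d * (1 - r kappa)))
    <= Cb d beta / kappa.
Proof.
  intros Hd Hb Hl HR kappa Hk.
  destruct (HR kappa Hk) as [Hr [s [HT Hexp]]].
  split; auto.
  pose proof (trace_bounds d beta kappa (r kappa) s Hd Hb Hk Hr HT) as [H1 H2].
  assert (Hln : ln (r kappa) = beta * mu - beta * lambda * s / kappa ^ d).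
  { rewrite Hexp. apply ln_exp. }
  assert (Hk0 : 0 < kappa ^ d) by (apply pow_lt; lra).
  assert (Hs : s / kappa ^ d = mu / lambda - ln (r kappa) / (beta * lambda)).
  { rewrite Hln. field. repeat split; lra. }
  unfold Fn. apply Rabs_le. lra.
Qed.

Lemma Rabs_le_inv' x b : Rabs x <= b -> - b <= x <= b.
Proof. unfold Rabs; destruct Rcase_abs; lra. Qed.

Lemma pow_ge_self k d : 1 <= k -> (1 <= d)%nat -> k <= k ^ d.
Proof.
  intros Hk Hd. destruct d; [lia|]. simpl. rewrite <- (Rmult_1_r k) at 1.
  apply Rmult_le_compat_l; [lra|]. apply pow_ge1; lra.
Qed.

Lemma A_bound k d r rho : 1 <= k -> (1 <= d)%nat -> 0 < r <= rho -> rho < 1 ->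
  0 <= r / (k ^ d * (1 - r)) <= rho / (k * (1 - rho)).
Proof.
  intros Hk Hd Hr Hrho. pose proof (pow_ge_self k d Hk Hd).
  split. apply Rlt_le, Rdiv_lt_0_compat; nra.
  unfold Rdiv. apply Rle_trans with (rho * / (k ^ d * (1 - r))).
  apply Rmult_le_compat_r. left; apply Rinv_0_lt_compat; nra. lra.
  apply Rmult_le_compat_l. lra. apply Rinv_le_contravar. nra.
  apply Rmult_le_compat; lra.
Qed.

Lemma cv_unique f l1 l2 : cv_at_infty f l1 -> cv_at_infty f l2 -> l1 = l2.
Proof.
  intros H1 H2. destruct (Req_dec l1 l2) as [|Hne]; auto.
  set (e := Rabs (l1 - l2) / 2).
  assert (He : 0 < e) by (unfold e; apply Rdiv_lt_0_compat; [apply Rabs_pos_lt; lra| lra]).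
  destruct (H1 e He) as [M1 HM1]. destruct (H2 e He) as [M2 HM2].
  specialize (HM1 (Rmax M1 M2) (Rmax_l _ _)). specialize (HM2 (Rmax M1 M2) (Rmax_r _ _)).
  exfalso. unfold e in *.
  pose proof (Rabs_triang (l1 - f (Rmax M1 M2)) (f (Rmax M1 M2) - l2)).
  replace (l1 - f (Rmax M1 M2) + (f (Rmax M1 M2) - l2)) with (l1 - l2) in H by ring.
  rewrite <- Rabs_Ropp in HM1. replace (- (f (Rmax M1 M2) - l1)) with (l1 - f (Rmax M1 M2)) in HM1 by ring.
  lra.
Qed.

Lemma plus_infty_not_cv f l : to_plus_infty f -> ~ cv_at_infty f l.
Proof.
  intros H1 H2. destruct (H2 1 ltac:(lra)) as [M1 HM1]. destruct (H1 (l + 1)) as [M2 HM2].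
  specialize (HM1 (Rmax M1 M2) (Rmax_l _ _)). specialize (HM2 (Rmax M1 M2) (Rmax_r _ _)).
  apply Rabs_def2 in HM1. lra.
Qed.

Lemma conv_bounded f l : cv_at_infty f l -> exists M, forall k, M <= k -> f k < l + 1.
Proof. intro H. destruct (H 1 ltac:(lra)) as [M HM]. exists M. intros k Hk. specialize (HM k Hk). apply Rabs_def2 in HM. lra. Qed.

Lemma regime_sub d beta lambda mu zeta r : (3 <= d)%nat -> 0 < beta -> 0 < lambda ->
  ZetaVal d zeta -> IsRkappa d beta lambda mu r -> mu / lambda < zeta / beta ^ d ->
  exists rs, 0 < rs < 1 /\ Fn d beta lambda rs = mu / lambda /\ cv_at_infty r rs /\
    to_plus_infty (fun kappa => kappa ^ d * (1 - r kappa)).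
Proof.
  intros Hd Hb Hl HZ HR Hsub.
  set (c := mu / lambda) in *.
  pose proof (key d beta lambda mu r Hd Hb Hl HR) as HK. fold c in HK.
  set (C := Cb d beta). assert (HC : 0 < C) by (apply Cb_pos; auto).
  destruct (Fn_small d beta lambda c Hb Hl) as [a [Ha Hac]].
  destruct (Fn_near1 d beta lambda zeta Hb Hl HZ (zeta / beta ^ d - c) ltac:(lra)) as [dl [Hdl Hnear]].
  set (b := Rmax (1 - dl) ((a + 1) / 2)).
  assert (Hb1 : 1 - dl <= b /\ (a + 1) / 2 <= b /\ b < 1).
  { unfold b. split. apply Rmax_l. split. apply Rmax_r. apply Rmax_lub_lt; lra. }
  specialize (Hnear b ltac:(lra)).
  destruct (IVT_interv (fun t => Fn d beta lambda t - c) a b) as [rs [Hrs1 Hrs2]].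
  { intros t Ht. apply continuity_pt_minus. apply Fn_cont; lia || lra. apply continuity_pt_const; intros ? ?; auto. }
  lra. lra. lra.
  assert (Hrs : 0 < rs < 1) by lra.
  assert (HFrs : Fn d beta lambda rs = c) by lra.
  assert (Hcv : cv_at_infty r rs).
  { intros eps He.
    set (e := Rmin (eps / 2) (Rmin (rs / 2) ((1 - rs) / 2))).
    assert (He1 : 0 < e /\ e <= eps / 2 /\ e <= rs / 2 /\ e <= (1 - rs) / 2).
    { unfold e. pose proof (Rmin_l (eps / 2) (Rmin (rs / 2) ((1 - rs) / 2))).
      pose proof (Rmin_r (eps / 2) (Rmin (rs / 2) ((1 - rs) / 2))).
      pose proof (Rmin_l (rs / 2) ((1 - rs) / 2)). pose proof (Rmin_r (rs / 2) ((1 - rs) / 2)).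
      split; [|lra]. apply Rmin_glb_lt. lra. apply Rmin_glb_lt; lra. }
    set (rho := rs + e).
    assert (Hrho : rho < 1) by (unfold rho; lra).
    assert (Erho : rho = rs + e) by reflexivity.
    set (g1 := Fn d beta lambda rho - c).
    set (g2 := c - Fn d beta lambda (rs - e)).
    assert (Hg1 : 0 < g1). { unfold g1. rewrite <- HFrs. pose proof (Fn_strict d beta lambda rs rho Hb Hl ltac:(unfold rho; lra) Hrho). lra. }
    assert (Hg2 : 0 < g2). { unfold g2. rewrite <- HFrs. pose proof (Fn_strict d beta lambda (rs - e) rs Hb Hl ltac:(lra) ltac:(lra)). lra. }
    assert (Eg1 : g1 = Fn d beta lambda rho - c) by reflexivity.
    assert (Eg2 : g2 = c - Fn d beta lambda (rs - e)) by reflexivity.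
    set (g := Rmin g1 g2).
    assert (Hg : 0 < g /\ g <= g1 /\ g <= g2).
    { unfold g. split. apply Rmin_glb_lt; lra. split. apply Rmin_l. apply Rmin_r. }
    set (K := (rho / (1 - rho) + C) / g).
    exists (Rmax 1 (K + 1)). intros kappa Hk.
    assert (Hk1 : 1 <= kappa) by (pose proof (Rmax_l 1 (K + 1)); lra).
    assert (HkK : K + 1 <= kappa) by (pose proof (Rmax_r 1 (K + 1)); lra).
    assert (Hrr : 0 <= rho / (1 - rho)) by (apply Rlt_le, Rdiv_lt_0_compat; unfold rho; lra).
    assert (HKg : (rho / (1 - rho) + C) / kappa < g).
    { apply Rmult_lt_reg_r with kappa. lra. unfold Rdiv. rewrite Rmult_assoc, Rinv_l by lra. rewrite Rmult_1_r.
      assert (K * g = rho / (1 - rho) + C) by (unfold K; field; lra). nra. }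
    assert (HCk : C / kappa <= (rho / (1 - rho) + C) / kappa).
    { unfold Rdiv. apply Rmult_le_compat_r. left; apply Rinv_0_lt_compat; lra. lra. }
    destruct (HK kappa Hk1) as [Hr HKk]. fold C in HKk. apply Rabs_le_inv' in HKk.
    set (A := r kappa / (kappa ^ d * (1 - r kappa))) in *.
    assert (HA0 : 0 <= A).
    { unfold A. pose proof (pow_lt kappa d ltac:(lra)). apply Rlt_le, Rdiv_lt_0_compat; nra. }
    assert (Hup : r kappa < rho).
    { destruct (Rlt_le_dec (r kappa) rho) as [|Hge]; auto. exfalso.
      pose proof (Fn_mono d beta lambda rho (r kappa) Hb Hl ltac:(unfold rho; lra) ltac:(lra)). lra. }
    assert (Hlo : rs - e < r kappa).
    { destruct (Rlt_le_dec (rs - e) (r kappa)) as [|Hle]; auto. exfalso.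
      pose proof (Fn_mono d beta lambda (r kappa) (rs - e) Hb Hl ltac:(lra) ltac:(lra)).
      pose proof (A_bound kappa d (r kappa) rho Hk1 ltac:(lia) ltac:(lra) Hrho) as [_ HAb]. fold A in HAb.
      assert (rho / (kappa * (1 - rho)) + C / kappa = (rho / (1 - rho) + C) / kappa) by (field; unfold rho; lra).
      lra. }
    apply Rabs_def1; lra. }
  exists rs. split; auto. split; auto. split; auto.
  intro A0.
  destruct (Hcv ((1 - rs) / 2) ltac:(lra)) as [M HM].
  exists (Rmax (Rmax M 1) (2 * Rabs A0 / (1 - rs) + 1)). intros kappa Hk.
  pose proof (Rmax_l (Rmax M 1) (2 * Rabs A0 / (1 - rs) + 1)).
  pose proof (Rmax_r (Rmax M 1) (2 * Rabs A0 / (1 - rs) + 1)).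
  pose proof (Rmax_l M 1). pose proof (Rmax_r M 1).
  specialize (HM kappa ltac:(lra)). apply Rabs_def2 in HM.
  pose proof (pow_ge_self kappa d ltac:(lra) ltac:(lia)).
  assert (Hx1 : kappa * ((1 - rs) / 2) <= kappa ^ d * (1 - r kappa)).
  { apply Rmult_le_compat; lra. }
  assert (Hx2 : Rabs A0 < kappa * ((1 - rs) / 2)).
  { assert (2 * Rabs A0 / (1 - rs) < kappa) by lra.
    apply Rmult_lt_reg_r with (2 / (1 - rs)). apply Rdiv_lt_0_compat; lra.
    replace (kappa * ((1 - rs) / 2) * (2 / (1 - rs))) with kappa by (field; lra).
    replace (Rabs A0 * (2 / (1 - rs))) with (2 * Rabs A0 / (1 - rs)) by (field; lra). lra. }
  pose proof (Rle_abs A0). lra.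
Qed.

Lemma V_eq k d r : 0 < k -> 0 < r < 1 -> k ^ d * (1 - r) = r / (r / (k ^ d * (1 - r))).
Proof. intros Hk Hr. pose proof (pow_lt k d Hk). field. split; nra. Qed.

Lemma regime_sup d beta lambda mu zeta r : (3 <= d)%nat -> 0 < beta -> 0 < lambda ->
  ZetaVal d zeta -> IsRkappa d beta lambda mu r -> mu / lambda > zeta / beta ^ d ->
  cv_at_infty r 1 /\
  cv_at_infty (fun kappa => kappa ^ d * (1 - r kappa)) (/ (mu / lambda - zeta / beta ^ d)).
Proof.
  intros Hd Hb Hl HZ HR Hsup.
  set (c := mu / lambda) in *.
  pose proof (key d beta lambda mu r Hd Hb Hl HR) as HK. fold c in HK.
  set (C := Cb d beta). assert (HC : 0 < C) by (apply Cb_pos; auto).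
  set (g := c - zeta / beta ^ d). assert (Hg : 0 < g) by (unfold g; lra).
  assert (Eg : g = c - zeta / beta ^ d) by reflexivity.
  assert (HA : forall kappa, 1 <= kappa ->
     0 < r kappa < 1 /\
     g - C / kappa < r kappa / (kappa ^ d * (1 - r kappa)) /\
     r kappa / (kappa ^ d * (1 - r kappa)) <= c - Fn d beta lambda (r kappa) + C / kappa).
  { intros kappa Hk. destruct (HK kappa Hk) as [Hr HKk]. fold C in HKk. apply Rabs_le_inv' in HKk.
    pose proof (Fn_lt_zeta d beta lambda zeta (r kappa) Hb Hl HZ Hr). lra. }
  assert (Hr1 : forall kappa, 1 <= kappa -> 2 * C / g <= kappa -> 1 - r kappa < 2 / (g * kappa)).
  { intros kappa Hk HkC. destruct (HA kappa Hk) as [Hr [H1 H2]].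
    assert (HCk : C / kappa <= g / 2).
    { apply Rmult_le_reg_r with kappa. lra. unfold Rdiv. rewrite Rmult_assoc, Rinv_l by lra.
      assert (2 * C / g * g = 2 * C) by (field; lra). nra. }
    pose proof (pow_ge_self kappa d Hk ltac:(lia)) as Hkd.
    assert (HP : 0 < kappa ^ d * (1 - r kappa)) by nra.
    assert (Hm : g / 2 * (kappa ^ d * (1 - r kappa)) < r kappa).
    { assert (g / 2 < r kappa / (kappa ^ d * (1 - r kappa))) by lra.
      apply Rmult_lt_compat_r with (r := kappa ^ d * (1 - r kappa)) in H; auto.
      replace (r kappa / (kappa ^ d * (1 - r kappa)) * (kappa ^ d * (1 - r kappa))) with (r kappa) in H by (field; lra). lra. }
    assert (Hm2 : kappa * (1 - r kappa) < 2 / g).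
    { apply Rmult_lt_reg_l with (g / 2). lra.
      replace (g / 2 * (2 / g)) with 1 by (field; lra).
      apply Rle_lt_trans with (g / 2 * (kappa ^ d * (1 - r kappa))).
      apply Rmult_le_compat_l. lra. apply Rmult_le_compat_r; lra. lra. }
    apply Rmult_lt_reg_l with kappa. lra.
    replace (kappa * (2 / (g * kappa))) with (2 / g) by (field; lra). lra. }
  assert (Hcv1 : cv_at_infty r 1).
  { intros eps He. exists (Rmax 1 (Rmax (2 * C / g) (2 / (g * eps)))). intros kappa Hk.
    pose proof (Rmax_l 1 (Rmax (2 * C / g) (2 / (g * eps)))). pose proof (Rmax_r 1 (Rmax (2 * C / g) (2 / (g * eps)))).
    pose proof (Rmax_l (2 * C / g) (2 / (g * eps))). pose proof (Rmax_r (2 * C / g) (2 / (g * eps))).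
    specialize (Hr1 kappa ltac:(lra) ltac:(lra)). destruct (HA kappa ltac:(lra)) as [Hr _].
    assert (2 / (g * kappa) <= eps).
    { apply Rmult_le_reg_r with (g * kappa). nra.
      replace (2 / (g * kappa) * (g * kappa)) with 2 by (field; lra).
      assert (2 / (g * eps) * (g * eps) = 2) by (field; lra).
      assert (2 / (g * eps) * (g * eps) <= kappa * (g * eps)).
      { apply Rmult_le_compat_r. nra. lra. } nra. }
    apply Rabs_def1; lra. }
  split; auto.
  intros eps He.
  set (eta := Rmin (g / 2) (eps * g ^ 2 / (4 * (g + 1)))).
  assert (Heta : 0 < eta /\ eta <= g / 2 /\ eta <= eps * g ^ 2 / (4 * (g + 1))).
  { unfold eta. split. apply Rmin_glb_lt. lra. apply Rdiv_lt_0_compat. apply Rmult_lt_0_compat; auto. apply pow_lt; lra. lra.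
    split. apply Rmin_l. apply Rmin_r. }
  destruct (Fn_near1 d beta lambda zeta Hb Hl HZ (eta / 2) ltac:(lra)) as [dl [Hdl Hnear]].
  destruct (Hcv1 (Rmin dl eta) ltac:(apply Rmin_glb_lt; lra)) as [M1 HM1].
  exists (Rmax M1 (Rmax 1 (2 * C / eta + 1))). intros kappa Hk.
  pose proof (Rmax_l M1 (Rmax 1 (2 * C / eta + 1))). pose proof (Rmax_r M1 (Rmax 1 (2 * C / eta + 1))).
  pose proof (Rmax_l 1 (2 * C / eta + 1)). pose proof (Rmax_r 1 (2 * C / eta + 1)).
  specialize (HM1 kappa ltac:(lra)). apply Rabs_def2 in HM1.
  pose proof (Rmin_l dl eta). pose proof (Rmin_r dl eta).
  destruct (HA kappa ltac:(lra)) as [Hr [HA1 HA2]].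
  specialize (Hnear (r kappa) ltac:(lra)).
  assert (HCk : C / kappa < eta / 2).
  { apply Rmult_lt_reg_r with kappa. lra. unfold Rdiv. rewrite Rmult_assoc, Rinv_l by lra.
    assert (2 * C / eta * eta = 2 * C) by (field; lra). nra. }
  set (A := r kappa / (kappa ^ d * (1 - r kappa))) in *.
  assert (HAl : g - eta < A) by lra.
  assert (HAu : A < g + eta) by lra.
  rewrite (V_eq kappa d (r kappa) ltac:(lra) Hr). fold A.
  assert (HA0 : 0 < A) by lra.
  assert (Hg2 : 0 < g ^ 2) by (apply pow_lt; lra).
  assert (Hu : r kappa / A - / g <= eps / 2).
  { apply Rle_trans with (/ (g - eta) - / g).
    - apply Rplus_le_compat_r. unfold Rdiv. apply Rle_trans with (1 * / A).
      apply Rmult_le_compat_r. left; apply Rinv_0_lt_compat; lra. lra.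
      rewrite Rmult_1_l. apply Rinv_le_contravar; lra.
    - replace (/ (g - eta) - / g) with (eta / (g * (g - eta))) by (field; lra).
      apply Rle_trans with (eta / (g * (g / 2))).
      unfold Rdiv. apply Rmult_le_compat_l. lra. apply Rinv_le_contravar. nra. apply Rmult_le_compat_l; lra.
      apply Rle_trans with (eps * g ^ 2 / (4 * (g + 1)) / (g * (g / 2))).
      unfold Rdiv. apply Rmult_le_compat_r. left; apply Rinv_0_lt_compat; nra. lra.
      replace (eps * g ^ 2 / (4 * (g + 1)) / (g * (g / 2))) with (eps / (2 * (g + 1))) by (field; lra).
      apply Rmult_le_reg_r with (2 * (g + 1)). lra.
      replace (eps / (2 * (g + 1)) * (2 * (g + 1))) with eps by (field; lra). nra. }
  assert (Hl2 : - (eps / 2) <= r kappa / A - / g).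
  { apply Rle_trans with ((1 - eta) / (g + eta) - / g).
    - replace ((1 - eta) / (g + eta) - / g) with (- (eta * (1 + g) / (g * (g + eta)))) by (field; lra).
      apply Ropp_le_contravar.
      apply Rle_trans with (eta * (1 + g) / (g * g)).
      unfold Rdiv. apply Rmult_le_compat_l. nra. apply Rinv_le_contravar. nra. apply Rmult_le_compat_l; lra.
      apply Rle_trans with (eps * g ^ 2 / (4 * (g + 1)) * (1 + g) / (g * g)).
      unfold Rdiv. apply Rmult_le_compat_r. left; apply Rinv_0_lt_compat; nra. apply Rmult_le_compat_r; lra.
      replace (eps * g ^ 2 / (4 * (g + 1)) * (1 + g) / (g * g)) with (eps / 4) by (field; lra). lra.
    - apply Rplus_le_compat_r. unfold Rdiv.
      destruct (Rle_dec (1 - eta) 0).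
      { apply Rle_trans with 0. assert (0 < / (g + eta)) by (apply Rinv_0_lt_compat; lra). nra.
        assert (0 < / A) by (apply Rinv_0_lt_compat; lra). nra. }
      apply Rle_trans with ((1 - eta) * / A).
      apply Rmult_le_compat_l. lra. apply Rinv_le_contravar; lra.
      apply Rmult_le_compat_r. left; apply Rinv_0_lt_compat; lra. lra. }
  apply Rabs_def1; lra.
Qed.

Lemma regime_crit d beta lambda mu zeta r : (3 <= d)%nat -> 0 < beta -> 0 < lambda ->
  ZetaVal d zeta -> IsRkappa d beta lambda mu r -> mu / lambda = zeta / beta ^ d ->
  cv_at_infty r 1 /\ to_plus_infty (fun kappa => kappa ^ d * (1 - r kappa)).
Proof.
  intros Hd Hb Hl HZ HR Hcr.
  set (c := mu / lambda) in *.
  pose proof (key d beta lambda mu r Hd Hb Hl HR) as HK. fold c in HK.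
  set (C := Cb d beta). assert (HC : 0 < C) by (apply Cb_pos; auto).
  assert (Hcv1 : cv_at_infty r 1).
  { intros eps He.
    set (dl := Rmin (eps / 2) (1 / 2)).
    assert (Hdl : 0 < dl /\ dl <= eps / 2 /\ dl <= 1 / 2).
    { unfold dl. split. apply Rmin_glb_lt; lra. split. apply Rmin_l. apply Rmin_r. }
    set (h := c - Fn d beta lambda (1 - dl)).
    assert (Eh : h = c - Fn d beta lambda (1 - dl)) by reflexivity.
    assert (Hh : 0 < h) by (pose proof (Fn_lt_zeta d beta lambda zeta (1 - dl) Hb Hl HZ ltac:(lra)); lra).
    exists (Rmax 1 ((/ dl + C) / h + 1)). intros kappa Hk.
    pose proof (Rmax_l 1 ((/ dl + C) / h + 1)). pose proof (Rmax_r 1 ((/ dl + C) / h + 1)).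
    destruct (HK kappa ltac:(lra)) as [Hr HKk]. fold C in HKk. apply Rabs_le_inv' in HKk.
    assert (r kappa > 1 - dl).
    { destruct (Rlt_le_dec (1 - dl) (r kappa)) as [|Hle]; auto. exfalso.
      pose proof (Fn_mono d beta lambda (r kappa) (1 - dl) Hb Hl ltac:(lra) ltac:(lra)).
      pose proof (A_bound kappa d (r kappa) (1 - dl) ltac:(lra) ltac:(lia) ltac:(lra) ltac:(lra)) as [_ HAb].
      assert ((1 - dl) / (kappa * (1 - (1 - dl))) <= / dl / kappa).
      { replace ((1 - dl) / (kappa * (1 - (1 - dl)))) with ((1 - dl) * (/ dl / kappa)) by (field; lra).
        rewrite <- (Rmult_1_l (/ dl / kappa)) at 2. apply Rmult_le_compat_r.
        apply Rlt_le, Rdiv_lt_0_compat; [apply Rinv_0_lt_compat|]; lra. lra. }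
      assert ((/ dl + C) / kappa < h).
      { apply Rmult_lt_reg_r with kappa. lra. unfold Rdiv. rewrite Rmult_assoc, Rinv_l by lra.
        assert ((/ dl + C) / h * h = / dl + C) by (field; lra). nra. }
      assert ((/ dl + C) / kappa = / dl / kappa + C / kappa) by (field; lra).
      lra. }
    apply Rabs_def1; lra. }
  split; auto.
  intro A0.
  set (e' := / (4 * (Rabs A0 + 1))).
  pose proof (Rabs_pos A0).
  assert (He' : 0 < e') by (apply Rinv_0_lt_compat; lra).
  destruct (Fn_near1 d beta lambda zeta Hb Hl HZ e' He') as [dl [Hdl Hnear]].
  destruct (Hcv1 (Rmin dl (1/2)) ltac:(apply Rmin_glb_lt; lra)) as [M1 HM1].
  exists (Rmax M1 (Rmax 1 (C / e' + 1))). intros kappa Hk.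
  pose proof (Rmax_l M1 (Rmax 1 (C / e' + 1))). pose proof (Rmax_r M1 (Rmax 1 (C / e' + 1))).
  pose proof (Rmax_l 1 (C / e' + 1)). pose proof (Rmax_r 1 (C / e' + 1)).
  specialize (HM1 kappa ltac:(lra)). apply Rabs_def2 in HM1.
  pose proof (Rmin_l dl (1/2)). pose proof (Rmin_r dl (1/2)).
  destruct (HK kappa ltac:(lra)) as [Hr HKk]. fold C in HKk. apply Rabs_le_inv' in HKk.
  specialize (Hnear (r kappa) ltac:(lra)).
  assert (HCk : C / kappa < e').
  { apply Rmult_lt_reg_r with kappa. lra. unfold Rdiv. rewrite Rmult_assoc, Rinv_l by lra.
    assert (C / e' * e' = C) by (field; lra). nra. }
  pose proof (pow_lt kappa d ltac:(lra)).
  set (A := r kappa / (kappa ^ d * (1 - r kappa))) in *.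
  assert (HA0 : 0 < A) by (unfold A; apply Rdiv_lt_0_compat; nra).
  assert (HAu : A < 2 * e') by lra.
  rewrite (V_eq kappa d (r kappa) ltac:(lra) Hr). fold A.
  assert (Hfin : r kappa / A > (1 / 2) / (2 * e')).
  { apply Rlt_gt. unfold Rdiv. apply Rle_lt_trans with (r kappa * / (2 * e')).
    apply Rmult_le_compat_r. left; apply Rinv_0_lt_compat; lra. lra.
    apply Rmult_lt_compat_l. lra. apply Rinv_lt_contravar; nra. }
  replace ((1 / 2) / (2 * e')) with (Rabs A0 + 1) in Hfin by (unfold e'; field; lra).
  pose proof (Rle_abs A0). lra.
Qed.

Lemma FTC_gen f g a b (pr : Riemann_integrable f a b) : a <= b ->
  (forall x, a <= x <= b -> continuity_pt f x) ->
  (forall x, a <= x <= b -> derivable_pt_lim g x (f x)) ->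
  RiemannInt pr = g b - g a.
Proof.
  intros h C0 D.
  rewrite (RiemannInt_P20 h (FTC_P1 h C0) pr).
  assert (H1 := RiemannInt_P29 h C0).
  assert (H2 : antiderivative f g a b).
  { split; auto. intros x Hx. exists (exist _ (f x) (D x Hx)). reflexivity. }
  destruct (antiderivative_Ucte f _ _ _ _ H1 H2) as [C HC].
  rewrite !HC by lra. ring.
Qed.

Lemma Li_lip_all k a b rho : 0 <= a <= b -> b <= rho -> rho < 1 ->
  Li k b - Li k a <= (b - a) / (1 - rho) ^ 2.
Proof.
  intros Hab Hbr Hr.
  assert (Hq : (b - a) / (1 - rho) <= (b - a) / (1 - rho) ^ 2).
  { unfold Rdiv. apply Rmult_le_compat_l. lra. apply Rinv_le_contravar. apply pow_lt; lra.
    replace ((1 - rho) ^ 2) with ((1 - rho) * (1 - rho)) by ring. nra. }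
  destruct k.
  - rewrite !Li_0 by lra.
    replace (b / (1 - b) - a / (1 - a)) with ((b - a) / ((1 - a) * (1 - b))) by (field; lra).
    unfold Rdiv. apply Rmult_le_compat_l. lra. apply Rinv_le_contravar. nra.
    replace ((1 - rho) ^ 2) with ((1 - rho) * (1 - rho)) by ring. apply Rmult_le_compat; lra.
  - pose proof (Li_lip (S k) a b rho ltac:(lia) Hab Hbr Hr). lra.
Qed.

Lemma Li_cont_all d t : 0 < t < 1 -> continuity_pt (Li d) t.
Proof.
  intros Ht. unfold continuity_pt, continue_in, limit1_in, limit_in. simpl. unfold Rdist.
  intros eps He.
  set (rho := (1 + t) / 2).
  assert (Hr : 0 < 1 - rho) by (unfold rho; lra).
  assert (Hr2 : 0 < (1 - rho) ^ 2) by (apply pow_lt; lra).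
  exists (Rmin ((1 - t) / 2) (Rmin t (eps * (1 - rho) ^ 2))).
  split. apply Rmin_glb_lt. lra. apply Rmin_glb_lt. lra. nra.
  intros x [_ Hx].
  pose proof (Rmin_l ((1 - t) / 2) (Rmin t (eps * (1 - rho) ^ 2))).
  pose proof (Rmin_r ((1 - t) / 2) (Rmin t (eps * (1 - rho) ^ 2))).
  pose proof (Rmin_l t (eps * (1 - rho) ^ 2)). pose proof (Rmin_r t (eps * (1 - rho) ^ 2)).
  apply Rabs_def2 in Hx. destruct Hx as [Hx1 Hx2].
  assert (Hxr : x < rho) by (unfold rho; lra).
  destruct (Rle_dec x t).
  - pose proof (Li_lip_all d x t rho ltac:(lra) ltac:(unfold rho; lra) ltac:(unfold rho; lra)).
    pose proof (Li_mono d x t ltac:(lra) ltac:(lra)).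
    rewrite Rabs_left1 by lra.
    assert ((t - x) / (1 - rho) ^ 2 < eps).
    { apply Rmult_lt_reg_r with ((1 - rho) ^ 2). auto. unfold Rdiv. rewrite Rmult_assoc, Rinv_l by lra. lra. }
    lra.
  - pose proof (Li_lip_all d t x rho ltac:(lra) ltac:(unfold rho; lra) ltac:(unfold rho; lra)).
    pose proof (Li_mono d t x ltac:(lra) ltac:(lra)).
    rewrite Rabs_right by lra.
    assert ((x - t) / (1 - rho) ^ 2 < eps).
    { apply Rmult_lt_reg_r with ((1 - rho) ^ 2). auto. unfold Rdiv. rewrite Rmult_assoc, Rinv_l by lra. lra. }
    lra.
Qed.

Lemma yexp_bounds y x : 0 < y < 1 -> ln y < x -> 0 < y * exp (- x) < 1.
Proof.
  intros Hy Hx. split. apply Rmult_lt_0_compat. lra. apply exp_pos.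
  replace 1 with (y * exp (- ln y)). apply Rmult_lt_compat_l. lra. apply exp_increasing. lra.
  rewrite exp_Ropp, exp_ln by lra. field. lra.
Qed.

Lemma cont_yexp m y x : 0 < y < 1 -> ln y < x -> continuity_pt (fun x => Li m (y * exp (- x))) x.
Proof.
  intros Hy Hx.
  apply (continuity_pt_comp (fun x => y * exp (- x)) (Li m)).
  - apply derivable_continuous_pt. exists (y * (exp (- x) * -1)).
    apply derivable_pt_lim_scal.
    apply (derivable_pt_lim_comp Ropp exp). apply derivable_pt_lim_opp. apply derivable_pt_lim_id.
    apply derivable_pt_lim_exp.
  - apply Li_cont_all. apply yexp_bounds; auto.
Qed.

Lemma sum_scal_l c a n : sum_f_R0 (fun i => c * a i) n = c * sum_f_R0 a n.
Proof. induction n; simpl; [ring| rewrite IHn; ring]. Qed.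

Lemma dscal f K x l : derivable_pt_lim f x l -> derivable_pt_lim (fun x => K * f x) x (K * l).
Proof. intro H. exact (derivable_pt_lim_scal f K x l H). Qed.

Lemma dexp_lin a x : derivable_pt_lim (fun x => exp (a * x)) x (exp (a * x) * a).
Proof.
  apply (derivable_pt_lim_comp (fun x => a * x) exp).
  pose proof (dscal (fun x => x) a x 1 (derivable_pt_lim_id x)) as H. rewrite Rmult_1_r in H. exact H.
  apply derivable_pt_lim_exp.
Qed.

Lemma yexp_pow y x i : (y * exp (- x)) ^ S i = y ^ S i * exp (- INR (S i) * x).
Proof.
  rewrite Rpow_mult_distr. f_equal. rewrite <- exp_INR_mult. f_equal. ring.
Qed.

Lemma term_deriv m y i x :
  derivable_pt_lim (fun x => Lterm (S m) (y * exp (- x)) i) x (- Lterm m (y * exp (- x)) i).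
Proof.
  set (K := y ^ S i / INR (S i) ^ S m).
  set (a := - INR (S i)).
  assert (HS : 0 < INR (S i)) by (rewrite S_INR; pose proof (pos_INR i); lra).
  replace (fun x => Lterm (S m) (y * exp (- x)) i) with (fun x => K * exp (a * x)).
  2: { apply functional_extensionality. intro t. unfold Lterm, K, a. rewrite yexp_pow. unfold Rdiv. ring. }
  replace (- Lterm m (y * exp (- x)) i) with (K * (exp (a * x) * a)).
  apply (dscal (fun x => exp (a * x))). apply dexp_lin.
  unfold Lterm, K, a. rewrite yexp_pow. change (INR (S i) ^ S m) with (INR (S i) * INR (S i) ^ m).
  field. split. apply pow_nonzero; lra. lra.
Qed.

Lemma psum_deriv m y n x :
  derivable_pt_lim (fun x => sum_f_R0 (fun i => Lterm (S m) (y * exp (- x)) i) n) x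
    (sum_f_R0 (fun i => - Lterm m (y * exp (- x)) i) n).
Proof.
  induction n.
  - simpl. apply term_deriv.
  - simpl. apply (derivable_pt_lim_plus (fun x => sum_f_R0 (fun i => Lterm (S m) (y * exp (- x)) i) n)
      (fun x => Lterm (S m) (y * exp (- x)) (S n))); auto. apply term_deriv.
Qed.

Lemma Li_tail m z rho n : 0 <= z <= rho -> rho < 1 ->
  Li m z - sum_f_R0 (Lterm m z) n <= rho ^ S (S n) / (1 - rho).
Proof.
  intros Hz Hr.
  assert (H1 : infinite_sum (fun i => rho ^ S i + -1 * Lterm m z i) (rho / (1 - rho) + -1 * Li m z)).
  { apply isum_plus. apply geom_sum1; lra. apply isum_scal. apply Li_spec; lra. }
  assert (Hpos : forall i, 0 <= rho ^ S i + -1 * Lterm m z i).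
  { intro i. pose proof (Lterm_bounds m z i ltac:(lra)). assert (z ^ S i <= rho ^ S i) by (apply pow_incr; lra). lra. }
  pose proof (isum_le_lim _ _ n Hpos H1) as H2.
  rewrite plus_sum in H2. rewrite sum_scal_l in H2.
  assert (E : sum_f_R0 (fun i => rho ^ S i) n = rho * (1 - rho ^ S n) / (1 - rho)).
  { replace (rho * (1 - rho ^ S n) / (1 - rho)) with (rho * ((1 - rho ^ S n) / (1 - rho))) by (unfold Rdiv; ring).
    rewrite <- (tech3 rho n) by lra. rewrite <- sum_scal_l. apply sum_f_R0_ext. intro; simpl; ring. }
  rewrite E in H2.
  replace (rho ^ S (S n) / (1 - rho)) with (rho / (1 - rho) - rho * (1 - rho ^ S n) / (1 - rho))
    by (simpl; field; lra).
  lra.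
Qed.

Lemma Li_shift_deriv m y x0 : 0 < y < 1 -> ln y < x0 ->
  derivable_pt_lim (fun x => Li (S m) (y * exp (- x))) x0 (- Li m (y * exp (- x0))).
Proof.
  intros Hy Hx0.
  assert (Hdp : 0 < (x0 - ln y) / 2) by lra.
  set (dl := mkposreal _ Hdp).
  set (rho := y * exp (- (x0 - (x0 - ln y) / 2))).
  assert (Hrho : 0 < rho < 1) by (apply yexp_bounds; lra).
  assert (Hball : forall x, Boule x0 dl x -> 0 < y * exp (- x) <= rho).
  { intros x Hx. unfold Boule in Hx. simpl in Hx. apply Rabs_def2 in Hx.
    split. apply Rmult_lt_0_compat. lra. apply exp_pos.
    unfold rho. apply Rmult_le_compat_l. lra. left; apply exp_increasing. lra. }
  apply (CVU_derivable
     (fun n x => sum_f_R0 (fun i => Lterm (S m) (y * exp (- x)) i) n)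
     (fun n x => sum_f_R0 (fun i => - Lterm m (y * exp (- x)) i) n)
     (fun x => Li (S m) (y * exp (- x)))
     (fun x => - Li m (y * exp (- x))) x0 dl).
  - intros eps He.
    destruct (pow_lt_1_zero rho ltac:(rewrite Rabs_right; lra) (eps * (1 - rho)) ltac:(nra)) as [N HN].
    exists N. intros n x Hn Hx. specialize (Hball x Hx).
    assert (E : sum_f_R0 (fun i => - Lterm m (y * exp (- x)) i) n = - sum_f_R0 (Lterm m (y * exp (- x))) n).
    { clear. induction n; simpl; [ring| rewrite IHn; ring]. }
    rewrite E.
    pose proof (Li_tail m (y * exp (- x)) rho n ltac:(lra) ltac:(lra)).
    assert (sum_f_R0 (Lterm m (y * exp (- x))) n <= Li m (y * exp (- x))).
    { apply isum_le_lim. intro i; apply Lterm_bounds; lra. apply Li_spec; lra. }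
    specialize (HN (S (S n)) ltac:(lia)). rewrite Rabs_right in HN by (apply Rle_ge, pow_le; lra).
    assert (rho ^ S (S n) / (1 - rho) < eps).
    { apply Rmult_lt_reg_r with (1 - rho). lra. unfold Rdiv. rewrite Rmult_assoc, Rinv_l by lra. lra. }
    rewrite Rabs_left1 by lra. lra.
  - intros x Hx. specialize (Hball x Hx). apply (Li_spec (S m) (y * exp (- x))). lra.
  - intros n x Hx. apply psum_deriv.
  - apply Boule_center.
Qed.

Lemma Rmax0_cont x : continuity_pt (fun x => Rmax 0 x) x.
Proof.
  unfold continuity_pt, continue_in, limit1_in, limit_in. simpl. unfold Rdist.
  intros eps He. exists eps. split; auto. intros z [_ Hz].
  apply Rle_lt_trans with (Rabs (z - x)); auto.
  unfold Rmax. destruct (Rle_dec 0 z), (Rle_dec 0 x); unfold Rabs; repeat destruct Rcase_abs; lra.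
Qed.

Lemma improper_Li m y : 0 < y < 1 ->
  ImproperInt0 (fun x => Li m (y * exp (- Rmax 0 x))) (Li (S m) y).
Proof.
  intros Hy.
  assert (Hln : ln y < 0) by (apply ln_lt0; lra).
  assert (Hcont : forall x, continuity_pt (fun x => Li m (y * exp (- Rmax 0 x))) x).
  { intro x. apply (continuity_pt_comp (fun x => Rmax 0 x) (fun u => Li m (y * exp (- u)))).
    apply Rmax0_cont. apply cont_yexp; auto. pose proof (Rmax_l 0 x). lra. }
  assert (pr : forall T, Riemann_integrable (fun x => Li m (y * exp (- Rmax 0 x))) 0 T).
  { intro T. destruct (Rle_dec 0 T).
    - apply continuity_implies_RiemannInt; auto.
    - apply RiemannInt_P1. apply continuity_implies_RiemannInt; auto. lra. }
  exists pr. intros eps He.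
  exists (Rmax 1 (2 / eps)). intros T HT.
  pose proof (Rmax_l 1 (2 / eps)). pose proof (Rmax_r 1 (2 / eps)).
  assert (pr0 : Riemann_integrable (fun x => Li m (y * exp (- x))) 0 T).
  { apply continuity_implies_RiemannInt. lra. intros x Hx. apply cont_yexp; auto. lra. }
  rewrite (RiemannInt_P18 (pr T) pr0) by (try lra; intros x Hx; rewrite Rmax_right by lra; reflexivity).
  rewrite (FTC_gen _ (fun x => - Li (S m) (y * exp (- x))) 0 T pr0).
  3: { intros x Hx. apply cont_yexp; auto. lra. }
  3: { intros x Hx. replace (Li m (y * exp (- x))) with (- - Li m (y * exp (- x))) by ring.
       apply (derivable_pt_lim_opp (fun x => Li (S m) (y * exp (- x)))). apply Li_shift_deriv; auto. lra. }
  2: lra.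
  rewrite Ropp_0, exp_0, Rmult_1_r.
  set (z := y * exp (- T)).
  assert (Hz : 0 < z < 1) by (apply yexp_bounds; auto; lra).
  pose proof (Li_bounds (S m) z ltac:(lra)) as [Hz1 Hz2].
  assert (HzT : z <= / (1 + T)).
  { unfold z. pose proof (exp_ineq1_le T).
    assert (exp (- T) * exp T = 1) by (rewrite <- exp_plus; replace (- T + T) with 0 by ring; apply exp_0).
    apply Rmult_le_reg_r with (1 + T). lra. rewrite Rinv_l by lra.
    assert (exp (- T) * (1 + T) <= 1). { pose proof (exp_pos (- T)). nra. }
    pose proof (exp_pos (- T)). nra. }
  assert (z <= / 2). { apply Rle_trans with (/ (1 + T)); auto. apply Rinv_le_contravar; lra. }
  assert (z / (1 - z) <= 2 * z).
  { apply Rmult_le_reg_r with (1 - z). lra. unfold Rdiv. rewrite Rmult_assoc, Rinv_l by lra. nra. }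
  assert (2 / (1 + T) < eps).
  { apply Rmult_lt_reg_r with (1 + T). lra. unfold Rdiv. rewrite Rmult_assoc, Rinv_l by lra.
    assert (2 / eps * eps = 2) by (field; lra). nra. }
  rewrite Rabs_left1 by lra.
  assert (2 * z <= 2 / (1 + T)) by (unfold Rdiv; lra).
  lra.
Qed.

Lemma orthant_unique d : forall F l1 l2, OrthantInt d F l1 -> OrthantInt d F l2 -> l1 = l2.
Proof.
  induction d; intros F l1 l2 H1 H2.
  - simpl in *. congruence.
  - simpl in *. destruct H1 as [G1 [HG1 [pr1 HI1]]]. destruct H2 as [G2 [HG2 [pr2 HI2]]].
    assert (Heq : forall T, 0 <= T -> RiemannInt (pr1 T) = RiemannInt (pr2 T)).
    { intros T HT. apply RiemannInt_P18; auto. intros x Hx.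
      apply (IHd (fun t => F (x + t))); [apply HG1| apply HG2]; lra. }
    destruct (Req_dec l1 l2) as [|Hne]; auto. exfalso.
    set (e := Rabs (l1 - l2) / 2).
    assert (He : 0 < e) by (unfold e; apply Rdiv_lt_0_compat; [apply Rabs_pos_lt; lra| lra]).
    destruct (HI1 e He) as [M1 HM1]. destruct (HI2 e He) as [M2 HM2].
    set (T := Rmax 0 (Rmax M1 M2)).
    pose proof (Rmax_l 0 (Rmax M1 M2)). pose proof (Rmax_r 0 (Rmax M1 M2)).
    pose proof (Rmax_l M1 M2). pose proof (Rmax_r M1 M2).
    specialize (HM1 T ltac:(unfold T; lra)). specialize (HM2 T ltac:(unfold T; lra)).
    rewrite Heq in HM1 by (unfold T; lra).
    pose proof (Rabs_triang (l1 - RiemannInt (pr2 T)) (RiemannInt (pr2 T) - l2)).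
    replace (l1 - RiemannInt (pr2 T) + (RiemannInt (pr2 T) - l2)) with (l1 - l2) in H3 by ring.
    rewrite <- Rabs_Ropp in HM1. replace (- (RiemannInt (pr2 T) - l1)) with (l1 - RiemannInt (pr2 T)) in HM1 by ring.
    unfold e in *. lra.
Qed.

Lemma orthant_ext d : forall F F' l, OrthantInt d F l -> (forall t, 0 <= t -> F t = F' t) -> OrthantInt d F' l.
Proof.
  induction d; intros F F' l H HF.
  - simpl in *. rewrite H. apply HF. lra.
  - simpl in *. destruct H as [G [HG HI]]. exists G. split; auto.
    intros x Hx. apply (IHd (fun t => F (x + t))). apply HG; auto. intros t Ht. apply HF. lra.
Qed.

Lemma orthant_gen n : forall k y, 0 < y < 1 ->
  OrthantInt n (fun t => Li k (y * exp (- t))) (Li (k + n) y).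
Proof.
  induction n; intros k y Hy.
  - simpl. rewrite Nat.add_0_r, Ropp_0, exp_0, Rmult_1_r. reflexivity.
  - simpl. exists (fun x => Li (k + n) (y * exp (- Rmax 0 x))). split.
    + intros x Hx. rewrite Rmax_right by lra.
      assert (Hy' : 0 < y * exp (- x) < 1) by (apply yexp_bounds; auto; pose proof (ln_lt0 y Hy); lra).
      replace (fun t => Li k (y * exp (- (x + t)))) with (fun t => Li k (y * exp (- x) * exp (- t))).
      apply IHn; auto.
      apply functional_extensionality. intro t. rewrite Ropp_plus_distr, exp_plus, Rmult_assoc. reflexivity.
    + rewrite Nat.add_succ_r. apply improper_Li; auto.
Qed.

Lemma orthant_Li d y : 0 < y < 1 -> OrthantInt d (fun t => y / (exp t - y)) (Li d y).
Proof.
  intro Hy. apply orthant_ext with (fun t => Li 0 (y * exp (- t))).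
  - apply (orthant_gen d 0 y Hy).
  - intros t Ht. assert (Hz : 0 < y * exp (- t) < 1) by (apply yexp_bounds; auto; pose proof (ln_lt0 y Hy); lra).
    rewrite Li_0 by lra.
    assert (exp (- t) * exp t = 1) by (rewrite <- exp_plus; replace (- t + t) with 0 by ring; apply exp_0).
    assert (exp t - y <> 0).
    { intro H0. assert (y * exp (- t) = 1) by (replace y with (exp t) by lra; lra). lra. }
    rewrite exp_Ropp. pose proof (exp_pos t). field. split; lra.
Qed.

Lemma LimitEq_iff d beta lambda mu t : 0 < beta -> 0 < lambda -> 0 < t < 1 ->
  (LimitEq d beta lambda mu t <-> mu / lambda = Fn d beta lambda t).
Proof.
  intros Hb Hl Ht. unfold LimitEq, Fn. split.
  - intros [I [HI Heq]]. rewrite (orthant_unique d _ _ _ HI (orthant_Li d t Ht)) in Heq. auto.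
  - intro H. exists (Li d t). split; auto. apply orthant_Li; auto.
Qed.

Theorem proposition2p1 (d : nat) (beta lambda mu zeta_d : R) (r : R -> R) :
  (2 < d)%nat -> 0 < beta -> 0 < lambda ->
  ZetaVal d zeta_d ->
  IsRkappa d beta lambda mu r ->
  (* (a) *)
  (((exists rs, 0 < rs < 1 /\ cv_at_infty r rs) <-> beta ^ d * mu < zeta_d * lambda) /\
   (forall rs, 0 < rs < 1 -> cv_at_infty r rs ->
      LimitEq d beta lambda mu rs /\
      (forall t, 0 < t < 1 -> LimitEq d beta lambda mu t -> t = rs))) /\
  (* (b) *)
  (cv_at_infty (fun kappa => kappa ^ d * (1 - r kappa))
      (beta ^ d * lambda / (beta ^ d * mu - zeta_d * lambda))
     <-> beta ^ d * mu > zeta_d * lambda) /\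
  (* (c) *)
  ((cv_at_infty r 1 /\ to_plus_infty (fun kappa => kappa ^ d * (1 - r kappa)))
     <-> beta ^ d * mu = zeta_d * lambda).
Proof.
  intros Hd Hb Hl HZ HR.
  assert (Hd3 : (3 <= d)%nat) by lia.
  assert (HB : 0 < beta ^ d) by (apply pow_lt; lra).
  assert (Elt : beta ^ d * mu < zeta_d * lambda <-> mu / lambda < zeta_d / beta ^ d).
  { split; intro H.
    - apply Rmult_lt_reg_r with (lambda * beta ^ d). nra.
      replace (mu / lambda * (lambda * beta ^ d)) with (beta ^ d * mu) by (field; lra).
      replace (zeta_d / beta ^ d * (lambda * beta ^ d)) with (zeta_d * lambda) by (field; lra). auto.
    - apply Rmult_lt_reg_r with (/ (lambda * beta ^ d)). apply Rinv_0_lt_compat; nra.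
      replace (beta ^ d * mu * / (lambda * beta ^ d)) with (mu / lambda) by (field; lra).
      replace (zeta_d * lambda * / (lambda * beta ^ d)) with (zeta_d / beta ^ d) by (field; lra). auto. }
  assert (Egt : beta ^ d * mu > zeta_d * lambda <-> mu / lambda > zeta_d / beta ^ d).
  { split; intro H.
    - apply Rmult_lt_reg_r with (lambda * beta ^ d). nra.
      replace (mu / lambda * (lambda * beta ^ d)) with (beta ^ d * mu) by (field; lra).
      replace (zeta_d / beta ^ d * (lambda * beta ^ d)) with (zeta_d * lambda) by (field; lra). auto.
    - apply Rmult_lt_reg_r with (/ (lambda * beta ^ d)). apply Rinv_0_lt_compat; nra.
      replace (beta ^ d * mu * / (lambda * beta ^ d)) with (mu / lambda) by (field; lra).
      replace (zeta_d * lambda * / (lambda * beta ^ d)) with (zeta_d / beta ^ d) by (field; lra). auto. }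
  assert (Eeq : beta ^ d * mu = zeta_d * lambda <-> mu / lambda = zeta_d / beta ^ d).
  { split; intro H.
    - apply Rmult_eq_reg_r with (lambda * beta ^ d). 2: nra.
      replace (mu / lambda * (lambda * beta ^ d)) with (beta ^ d * mu) by (field; lra).
      replace (zeta_d / beta ^ d * (lambda * beta ^ d)) with (zeta_d * lambda) by (field; lra). auto.
    - apply Rmult_eq_reg_r with (/ (lambda * beta ^ d)). 2: apply Rinv_neq_0_compat; nra.
      replace (beta ^ d * mu * / (lambda * beta ^ d)) with (mu / lambda) by (field; lra).
      replace (zeta_d * lambda * / (lambda * beta ^ d)) with (zeta_d / beta ^ d) by (field; lra). auto. }
  set (c := mu / lambda) in *. set (Z := zeta_d / beta ^ d) in *.
  pose proof (regime_sub d beta lambda mu zeta_d r Hd3 Hb Hl HZ HR) as RS. fold c Z in RS.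
  pose proof (regime_sup d beta lambda mu zeta_d r Hd3 Hb Hl HZ HR) as RP. fold c Z in RP.
  pose proof (regime_crit d beta lambda mu zeta_d r Hd3 Hb Hl HZ HR) as RC. fold c Z in RC.
  assert (Hsub_of : forall rs, 0 < rs < 1 -> cv_at_infty r rs -> c < Z).
  { intros rs Hrs Hcv. destruct (Rtotal_order c Z) as [H|[H|H]]; auto; exfalso.
    - destruct (RC H) as [H1 _]. pose proof (cv_unique _ _ _ Hcv H1). lra.
    - destruct (RP H) as [H1 _]. pose proof (cv_unique _ _ _ Hcv H1). lra. }
  split; [split; [split|]|split; split].
  - intros [rs [Hrs Hcv]]. apply Elt. eapply Hsub_of; eauto.
  - intro H. apply Elt in H. destruct (RS H) as [rs [Hrs [_ [Hcv _]]]]. eauto.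
  - intros rs Hrs Hcv.
    pose proof (Hsub_of rs Hrs Hcv) as Hs.
    destruct (RS Hs) as [rs' [Hrs' [HF [Hcv' _]]]].
    pose proof (cv_unique _ _ _ Hcv Hcv') as E. subst rs'.
    split.
    + apply LimitEq_iff; auto.
    + intros t Ht HL. apply LimitEq_iff in HL; auto. fold c in HL.
      destruct (Rtotal_order t rs) as [H|[H|H]]; auto; exfalso.
      * pose proof (Fn_strict d beta lambda t rs Hb Hl ltac:(lra) ltac:(lra)). lra.
      * pose proof (Fn_strict d beta lambda rs t Hb Hl ltac:(lra) ltac:(lra)). lra.
  - intro Hcv. apply Egt. destruct (Rtotal_order c Z) as [H|[H|H]]; auto; exfalso.
    + destruct (RS H) as [_ [_ [_ [_ Hinf]]]]. exact (plus_infty_not_cv _ _ Hinf Hcv).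
    + destruct (RC H) as [_ Hinf]. exact (plus_infty_not_cv _ _ Hinf Hcv).
  - intro H. apply Egt in H. destruct (RP H) as [_ Hcv].
    replace (beta ^ d * lambda / (beta ^ d * mu - zeta_d * lambda)) with (/ (c - Z)); auto.
    unfold c, Z. field. split; [|split; lra].
    intro Habs. apply Egt in H. lra.
  - intros [Hcv Hinf]. apply Eeq. destruct (Rtotal_order c Z) as [H|[H|H]]; auto; exfalso.
    + destruct (RS H) as [rs [Hrs [_ [Hcv' _]]]]. pose proof (cv_unique _ _ _ Hcv Hcv'). lra.
    + destruct (RP H) as [_ Hcv']. exact (plus_infty_not_cv _ _ Hinf Hcv').
  - intro H. apply Eeq in H. apply RC; auto.
Qed.
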